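(* Let $0<q<1$, $M\in\mathbb{N}$, $r=q^{-M}$, and let $a,b,c,d,f,g,v,w$ be complex parameters with $\max\{|ac|,|ad|,|bc|,|bd|,|q/(bc)|\}<1$. Then \begin{align*} &\int_c^d\frac{\left(\frac{qt}{c},\frac{qt}{d};q\right)_\infty}{(at,bt;q)_\infty}\sum_{k=0}^\infty\frac{\left(r,f,g,\frac{c}{t},abcd;q\right)_k\left(\frac{qt}{bcd}\right)^k}{(v,w,ac,q;q)_k}\;{}_3\Phi_2\left[\begin{matrix}rq^k,fq^k,gq^k;\\ vq^k,wq^k;\end{matrix}\;q;\,q\right]{\rm d}_qt\\ &\qquad=\frac{d(1-q)\left(q,\frac{dq}{c},\frac{c}{d},abcd;q\right)_\infty}{(ac,ad,bc,bd;q)_\infty}\;{}_3\Phi_2\left[\begin{matrix}r,f,g;\\ v,w;\end{matrix}\;q;\,\frac{q}{bc}\right]. \end{align*}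
   Context: Throughout $0<q<1$. For complex $\alpha$: $(\alpha;q)_0=1$, $(\alpha;q)_n=\prod_{k=0}^{n-1}(1-\alpha q^k)$, $(\alpha;q)_\infty=\prod_{k=0}^\infty(1-\alpha q^k)$, and $(\alpha_1,\dots,\alpha_m;q)_n=(\alpha_1;q)_n\cdots(\alpha_m;q)_n$ (also for $n=\infty$). ${}_{3}\Phi_{2}\left[\begin{matrix}a_1,a_2,a_3;\\ b_1,b_2;\end{matrix}\,q;z\right]=\sum_{n=0}^\infty\frac{(a_1,a_2,a_3;q)_n}{(b_1,b_2;q)_n}\frac{z^n}{(q;q)_n}$. The $q$-integral (Jackson integral) is $\int_0^x F(t)\,{\rm d}_qt=x(1-q)\sum_{n=0}^\infty F(xq^n)q^n$ and $\int_c^dF(t)\,{\rm d}_qt=\int_0^dF(t)\,{\rm d}_qt-\int_0^cF(t)\,{\rm d}_qt$. *)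

(* Defs.v *)
From Stdlib Require Import Reals.
From Coquelicot Require Export Coquelicot.
Open Scope C_scope.

Definition Clim (u : nat -> C) : C :=
  (real (Lim_seq (fun n => Re (u n))), real (Lim_seq (fun n => Im (u n)))).

Fixpoint Cpown (x : C) (n : nat) : C :=
  match n with O => 1 | S m => Cpown x m * x end.

Fixpoint Cpsum (u : nat -> C) (N : nat) : C :=
  match N with O => 0 | S m => Cpsum u m + u m end.

Definition Csum (u : nat -> C) : C := Clim (Cpsum u).

Fixpoint qpoch (a q : C) (n : nat) : C :=
  match n with O => 1 | S m => qpoch a q m * (1 - a * Cpown q m) end.
Definition qpoch_inf (a q : C) : C := Clim (qpoch a q).

Definition phi32 (a1 a2 a3 b1 b2 q z : C) : C :=
  Csum (fun n => qpoch a1 q n * qpoch a2 q n * qpoch a3 q n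
                 / (qpoch b1 q n * qpoch b2 q n * qpoch q q n) * Cpown z n).

Definition qint0 (q : C) (F : C -> C) (x : C) : C :=
  x * (1 - q) * Csum (fun n => F (x * Cpown q n) * Cpown q n).
Definition qint (q : C) (F : C -> C) (c d : C) : C :=
  qint0 q F d - qint0 q F c.

(* Main.v *)
Require Import Defs.
From Stdlib Require Import Reals Lra Lia Classical FunctionalExtensionality.
From Coquelicot Require Import Coquelicot.
Open Scope C_scope.


Definition CV (u : nat -> C) (l : C) : Prop :=
  forall eps : R, (0 < eps)%R -> exists N : nat, forall n, (N <= n)%nat -> (Cmod (u n - l) < eps)%R.

Lemma Cmod_le_ReIm (z : C) : (Cmod z <= Rabs (Re z) + Rabs (Im z))%R.
Proof.
  destruct z as [a b].
  assert (E: (a, b) = ((a,0%R) + (0%R,b))) by (apply injective_projections; simpl; ring).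
  simpl. rewrite E at 1.
  eapply Rle_trans. apply Cmod_triangle.
  unfold Cmod; simpl.
  replace (a * (a * 1) + 0 * (0 * 1))%R with (Rsqr a) by (unfold Rsqr; ring).
  replace (0 * (0 * 1) + b * (b * 1))%R with (Rsqr b) by (unfold Rsqr; ring).
  rewrite !sqrt_Rsqr_abs. lra.
Qed.

Lemma Re_le_Cmod (z : C) : (Rabs (Re z) <= Cmod z)%R.
Proof. apply re_le_Cmod. Qed.

Lemma Im_le_Cmod (z : C) : (Rabs (Im z) <= Cmod z)%R.
Proof.
  destruct z as [a b]. unfold Cmod; simpl.
  rewrite <- sqrt_Rsqr_abs. apply sqrt_le_1_alt. unfold Rsqr.
  assert (0 <= a*a)%R by nra. rewrite !Rmult_1_r. lra.
Qed.

Lemma CV_Clim u l : CV u l -> Clim u = l.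
Proof.
  intros H. unfold Clim.
  assert (HR : is_lim_seq (fun n => Re (u n)) (Re l)).
  { apply is_lim_seq_spec. intros eps. destruct (H eps (cond_pos eps)) as [N HN].
    exists N. intros n Hn. specialize (HN n Hn).
    eapply Rle_lt_trans; [|exact HN].
    replace (Re (u n) - Re l)%R with (Re (u n - l)) by (unfold Re, Im; simpl; ring).
    apply Re_le_Cmod. }
  assert (HI : is_lim_seq (fun n => Im (u n)) (Im l)).
  { apply is_lim_seq_spec. intros eps. destruct (H eps (cond_pos eps)) as [N HN].
    exists N. intros n Hn. specialize (HN n Hn).
    eapply Rle_lt_trans; [|exact HN].
    replace (Im (u n) - Im l)%R with (Im (u n - l)) by (unfold Re, Im; simpl; ring).
    apply Im_le_Cmod. }
  rewrite (is_lim_seq_unique _ _ HR), (is_lim_seq_unique _ _ HI). simpl.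
  destruct l; reflexivity.
Qed.

Lemma CV_unique u l1 l2 : CV u l1 -> CV u l2 -> l1 = l2.
Proof. intros H1 H2. rewrite <- (CV_Clim _ _ H1). apply CV_Clim; auto. Qed.

Lemma CV_eq_l u l l' : CV u l -> l = l' -> CV u l'.
Proof. intros H ->; auto. Qed.

Lemma CV_ext_ev u v l N0 : (forall n, (N0 <= n)%nat -> u n = v n) -> CV u l -> CV v l.
Proof.
  intros He H eps Heps. destruct (H eps Heps) as [N HN]. exists (max N N0).
  intros n Hn. rewrite <- He by lia. apply HN. lia.
Qed.

Lemma CV_ext u v l : (forall n, u n = v n) -> CV u l -> CV v l.
Proof. intros He. apply (CV_ext_ev u v l 0). intros; auto. Qed.

Lemma CV_const c : CV (fun _ => c) c.
Proof. intros eps Heps. exists 0%nat. intros. replace (c - c) with (RtoC 0) by ring. rewrite Cmod_0. lra. Qed.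

Lemma CV_0 u l : CV u l <-> CV (fun n => u n - l) 0.
Proof.
  split; intros H eps Heps; destruct (H eps Heps) as [N HN]; exists N; intros n Hn;
  specialize (HN n Hn).
  - replace (u n - l - 0) with (u n - l) by ring. auto.
  - replace (u n - l) with (u n - l - 0) by ring. auto.
Qed.

Lemma CV_plus u v l m : CV u l -> CV v m -> CV (fun n => u n + v n) (l + m).
Proof.
  intros Hu Hv eps Heps.
  destruct (Hu (eps/2)%R) as [N1 H1]; [lra|].
  destruct (Hv (eps/2)%R) as [N2 H2]; [lra|].
  exists (max N1 N2). intros n Hn.
  replace (u n + v n - (l + m)) with ((u n - l) + (v n - m)) by ring.
  eapply Rle_lt_trans. apply Cmod_triangle.
  specialize (H1 n ltac:(lia)). specialize (H2 n ltac:(lia)). lra.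
Qed.

Lemma CV_0_mult_bounded u v K N0 :
  CV u 0 -> (forall n, (N0 <= n)%nat -> (Cmod (v n) <= K)%R) -> CV (fun n => u n * v n) 0.
Proof.
  intros Hu Hv eps Heps.
  assert (HK : (0 < Rabs K + 1)%R) by (pose proof (Rabs_pos K); lra).
  destruct (Hu (eps / (Rabs K + 1))%R) as [N HN].
  { apply Rdiv_lt_0_compat; lra. }
  exists (max N N0). intros n Hn.
  specialize (HN n ltac:(lia)). specialize (Hv n ltac:(lia)).
  replace (u n * v n - 0) with ((u n - 0) * v n) by ring.
  rewrite Cmod_mult.
  pose proof (Cmod_ge_0 (u n - 0)). pose proof (Cmod_ge_0 (v n)).
  assert (Cmod (v n) <= Rabs K)%R by (pose proof (Rle_abs K); lra).
  apply Rle_lt_trans with (Cmod (u n - 0) * (Rabs K + 1))%R.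
  { apply Rmult_le_compat_l; lra. }
  apply Rmult_lt_reg_r with (/ (Rabs K + 1))%R.
  { apply Rinv_0_lt_compat; lra. }
  rewrite Rmult_assoc, Rinv_r by lra. rewrite Rmult_1_r. exact HN.
Qed.

Lemma CV_bounded u l : CV u l -> exists K, forall n, (Cmod (u n) <= K)%R.
Proof.
  intros H. destruct (H 1%R ltac:(lra)) as [N HN].
  assert (Hfin : forall M, exists K, forall n, (n < M)%nat -> (Cmod (u n) <= K)%R).
  { induction M as [|M [K HK]].
    - exists 0%R. intros; lia.
    - exists (Rmax K (Cmod (u M))). intros n Hn.
      destruct (Nat.eq_dec n M) as [->|Hne].
      + apply Rmax_r.
      + eapply Rle_trans; [apply HK; lia| apply Rmax_l]. }
  destruct (Hfin N) as [K HK].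
  exists (Rmax K (Cmod l + 1))%R. intros n.
  destruct (Nat.lt_ge_cases n N) as [Hn|Hn].
  - eapply Rle_trans; [apply HK; auto| apply Rmax_l].
  - eapply Rle_trans; [|apply Rmax_r].
    specialize (HN n Hn).
    replace (u n) with ((u n - l) + l) by ring.
    eapply Rle_trans. apply Cmod_triangle. lra.
Qed.

Lemma CV_scal u l k : CV u l -> CV (fun n => k * u n) (k * l).
Proof.
  intros H. apply CV_0. apply CV_0 in H.
  apply (CV_ext (fun n => (u n - l) * k)). { intros; ring. }
  apply (CV_0_mult_bounded _ _ (Cmod k) 0); auto. intros; lra.
Qed.

Lemma CV_mult u v l m : CV u l -> CV v m -> CV (fun n => u n * v n) (l * m).
Proof.
  intros Hu Hv. destruct (CV_bounded _ _ Hv) as [K HK].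
  apply CV_0.
  apply (CV_ext (fun n => (u n - l) * v n + (l * (v n - m)))). { intros; ring. }
  eapply CV_eq_l. apply CV_plus.
  - apply (CV_0_mult_bounded _ _ K 0); auto. exact (proj1 (CV_0 _ _) Hu).
  - apply CV_scal. exact (proj1 (CV_0 _ _) Hv).
  - ring.
Qed.

Lemma CV_minus u v l m : CV u l -> CV v m -> CV (fun n => u n - v n) (l - m).
Proof.
  intros Hu Hv. apply (CV_ext (fun n => u n + (-1) * v n)). { intros; ring. }
  replace (l - m) with (l + (-1) * m) by ring. apply CV_plus; auto. apply CV_scal; auto.
Qed.

Lemma CV_inv u (l : C) : l <> 0 -> CV u l -> CV (fun n => / u n) (/ l).
Proof.
  intros Hl H.
  assert (Hl' : (0 < Cmod l)%R). { apply (proj1 (Cmod_gt_0 l)). exact Hl. }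
  destruct (H (Cmod l / 2)%R) as [N HN]; [lra|].
  assert (Hb : forall n, (N <= n)%nat -> (Cmod l / 2 <= Cmod (u n))%R).
  { intros n Hn. specialize (HN n Hn).
    pose proof (Cmod_triangle (u n) (l - u n)).
    replace (u n + (l - u n)) with l in H0 by ring.
    rewrite <- Cmod_opp in HN. replace (- (u n - l)) with (l - u n) in HN by ring. lra. }
  assert (Hnz : forall n, (N <= n)%nat -> u n <> 0).
  { intros n Hn E. specialize (Hb n Hn). rewrite E, Cmod_0 in Hb. lra. }
  apply CV_0.
  apply (CV_ext_ev (fun n => (l - u n) * (/ (u n * l)))) with N.
  { intros n Hn. field. split; auto. }
  apply (CV_0_mult_bounded _ _ (2 / (Cmod l * Cmod l))%R N).
  - apply (CV_ext (fun n => (-1) * (u n - l))). { intros; ring. }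
    eapply CV_eq_l. apply CV_scal. exact (proj1 (CV_0 _ _) H). ring.
  - intros n Hn. specialize (Hb n Hn). specialize (Hnz n Hn).
    rewrite Cmod_inv by (apply Cmult_neq_0; auto). rewrite Cmod_mult.
    assert (0 < Cmod (u n))%R by (apply (proj1 (Cmod_gt_0 _)); auto).
    unfold Rdiv. rewrite Rinv_mult.
    apply Rle_trans with (/ (Cmod l / 2) * / Cmod l)%R.
    + apply Rmult_le_compat_r. { left; apply Rinv_0_lt_compat; lra. }
      apply Rinv_le_contravar; lra.
    + right. field. lra.
Qed.

Lemma CV_div u v (l m : C) : m <> 0 -> CV u l -> CV v m -> CV (fun n => u n / v n) (l / m).
Proof. intros. unfold Cdiv. apply CV_mult; auto. apply CV_inv; auto. Qed.

Lemma CV_shift u l k : CV u l -> CV (fun n => u (n + k)%nat) l.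
Proof. intros H eps Heps. destruct (H eps Heps) as [N HN]. exists N. intros. apply HN. lia. Qed.

Lemma CV_subseq u l (phi : nat -> nat) : (forall n, (n <= phi n)%nat) -> CV u l -> CV (fun n => u (phi n)) l.
Proof. intros Hp H eps Heps. destruct (H eps Heps) as [N HN]. exists N. intros. apply HN. specialize (Hp n). lia. Qed.

Lemma CV_le u l z B M : CV u l -> (forall n, (M <= n)%nat -> (Cmod (u n - z) <= B)%R) -> (Cmod (l - z) <= B)%R.
Proof.
  intros H Hb. apply Rnot_lt_le. intros Hlt.
  destruct (H (Cmod (l - z) - B)%R) as [N HN]; [lra|].
  specialize (HN (max N M) ltac:(lia)). specialize (Hb (max N M) ltac:(lia)).
  pose proof (Cmod_triangle (u (max N M) - z) (l - u (max N M))).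
  replace (u (max N M) - z + (l - u (max N M))) with (l - z) in H0 by ring.
  rewrite <- Cmod_opp in HN. replace (- (u (max N M) - l)) with (l - u (max N M)) in HN by ring.
  lra.
Qed.

Lemma CV_Cauchy u :
  (forall eps, (0 < eps)%R -> exists N, forall n m, (N <= n)%nat -> (N <= m)%nat -> (Cmod (u n - u m) < eps)%R) ->
  exists l, CV u l.
Proof.
  intros H.
  assert (HR : ex_finite_lim_seq (fun n => Re (u n))).
  { apply ex_lim_seq_cauchy_corr. intros eps. destruct (H eps (cond_pos eps)) as [N HN].
    exists N. intros n m Hn Hm. eapply Rle_lt_trans; [|apply (HN n m Hn Hm)].
    replace (Re (u n) - Re (u m))%R with (Re (u n - u m)) by (unfold Re, Im; simpl; ring). apply Re_le_Cmod. }
  assert (HI : ex_finite_lim_seq (fun n => Im (u n))).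
  { apply ex_lim_seq_cauchy_corr. intros eps. destruct (H eps (cond_pos eps)) as [N HN].
    exists N. intros n m Hn Hm. eapply Rle_lt_trans; [|apply (HN n m Hn Hm)].
    replace (Im (u n) - Im (u m))%R with (Im (u n - u m)) by (unfold Re, Im; simpl; ring). apply Im_le_Cmod. }
  destruct HR as [lr Hr]. destruct HI as [li Hi].
  exists (lr, li). intros eps Heps.
  apply is_lim_seq_spec in Hr. apply is_lim_seq_spec in Hi.
  destruct (Hr (mkposreal (eps/2) ltac:(lra))) as [N1 H1].
  destruct (Hi (mkposreal (eps/2) ltac:(lra))) as [N2 H2].
  exists (max N1 N2). intros n Hn.
  eapply Rle_lt_trans. apply Cmod_le_ReIm.
  specialize (H1 n ltac:(lia)). specialize (H2 n ltac:(lia)). simpl in H1, H2. unfold Re, Im in *; simpl. unfold Rminus in H1, H2. lra.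
Qed.


Lemma Cpown_R (q : R) n : Cpown (RtoC q) n = RtoC (q ^ n).
Proof. induction n; simpl. reflexivity. rewrite IHn, RtoC_mult. ring. Qed.

Lemma Cmod_Cpown (x : C) n : Cmod (Cpown x n) = (Cmod x ^ n)%R.
Proof. induction n; simpl. apply Cmod_1. rewrite Cmod_mult, IHn. ring. Qed.

Lemma Cmod_Cpown_R (q : R) n : (0 <= q)%R -> Cmod (Cpown (RtoC q) n) = (q ^ n)%R.
Proof. intros. rewrite Cmod_Cpown, Cmod_R, Rabs_pos_eq; auto. Qed.

Lemma Cpown_nz (x : C) n : x <> 0 -> Cpown x n <> 0.
Proof. intros H. induction n; simpl. intro E. apply C1_nz. exact E. apply Cmult_neq_0; auto. Qed.

Lemma Cpown_add (x : C) m n : Cpown x (m + n) = Cpown x m * Cpown x n.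
Proof. induction n. rewrite Nat.add_0_r. simpl. ring. rewrite Nat.add_succ_r. simpl. rewrite IHn. ring. Qed.

Lemma Cpown_mult (x y : C) n : Cpown (x * y) n = Cpown x n * Cpown y n.
Proof. induction n; simpl. ring. rewrite IHn. ring. Qed.

Definition HasSum (u : nat -> C) (l : C) := CV (Cpsum u) l.

Lemma HasSum_Csum u l : HasSum u l -> Csum u = l.
Proof. apply CV_Clim. Qed.

Lemma Cpsum_ext u v N : (forall n, (n < N)%nat -> u n = v n) -> Cpsum u N = Cpsum v N.
Proof. induction N; intros H; simpl. auto. rewrite IHN, H; auto. Qed.

Lemma Cpsum_plus u v N : Cpsum (fun n => u n + v n) N = Cpsum u N + Cpsum v N.
Proof. induction N; simpl. ring. rewrite IHN. ring. Qed.

Lemma Cpsum_scal k u N : Cpsum (fun n => k * u n) N = k * Cpsum u N.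
Proof. induction N; simpl. ring. rewrite IHN. ring. Qed.

Lemma Cpsum_add u k n : Cpsum u (k + n) = Cpsum u k + Cpsum (fun j => u (k + j)%nat) n.
Proof. induction n; simpl. rewrite Nat.add_0_r. ring. rewrite Nat.add_succ_r. simpl. rewrite IHn. ring. Qed.

Lemma HasSum_ext u v l : (forall n, u n = v n) -> HasSum u l -> HasSum v l.
Proof. intros He H. apply (CV_ext (Cpsum u)); auto. intros; apply Cpsum_ext; auto. Qed.

Lemma HasSum_plus u v a b : HasSum u a -> HasSum v b -> HasSum (fun n => u n + v n) (a + b).
Proof. intros. apply (CV_ext (fun n => Cpsum u n + Cpsum v n)). intros; rewrite Cpsum_plus; auto. apply CV_plus; auto. Qed.

Lemma HasSum_scal k u a : HasSum u a -> HasSum (fun n => k * u n) (k * a).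
Proof. intros. apply (CV_ext (fun n => k * Cpsum u n)). intros; rewrite Cpsum_scal; auto. apply CV_scal; auto. Qed.

Lemma HasSum_minus u v a b : HasSum u a -> HasSum v b -> HasSum (fun n => u n - v n) (a - b).
Proof.
  intros. apply (HasSum_ext (fun n => u n + (-1) * v n)). intros; ring.
  replace (a - b) with (a + (-1) * b) by ring. apply HasSum_plus; auto. apply HasSum_scal; auto.
Qed.

Lemma HasSum_shift u l k : HasSum u l -> HasSum (fun n => u (k + n)%nat) (l - Cpsum u k).
Proof.
  intros H. apply (CV_ext (fun n => Cpsum u (n + k) - Cpsum u k)).
  { intros n. rewrite Nat.add_comm, Cpsum_add. ring. }
  apply CV_minus. apply CV_shift; auto. apply CV_const.
Qed.

Lemma HasSum_evzero (u : nat -> C) N : (forall n, (N <= n)%nat -> u n = 0) -> HasSum u (Cpsum u N).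
Proof.
  intros H. apply (CV_ext_ev (fun _ => Cpsum u N)) with N.
  { intros n Hn. replace n with (N + (n - N))%nat by lia. rewrite Cpsum_add.
    rewrite (Cpsum_ext (fun j => u (N + j)%nat) (fun _ => RtoC 0)). 2: { intros j _. apply H. lia. }
    assert (Z: forall k, Cpsum (fun _ => RtoC 0) k = 0) by (induction k; simpl; [reflexivity| rewrite IHk; ring]). rewrite Z. ring. }
  apply CV_const.
Qed.

Lemma HasSum_telescope (g : nat -> C) L : CV g L -> HasSum (fun n => g n - g (S n)) (g O - L).
Proof.
  intros H. apply (CV_ext (fun n => g O - g n)).
  { intros n. induction n; simpl. ring. rewrite <- IHn. ring. }
  apply CV_minus; auto. apply CV_const.
Qed.

Lemma geo_bound (u : nat -> C) (q K : R) :
  (0 <= q < 1)%R -> (forall j, (Cmod (u j) <= K * q ^ j)%R) ->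
  forall M n, (Cmod (Cpsum u (M + n) - Cpsum u M) <= K * q ^ M / (1 - q))%R.
Proof.
  intros Hq Hu M n.
  assert (HK : (0 <= K)%R). { specialize (Hu O). simpl in Hu. pose proof (Cmod_ge_0 (u O)). lra. }
  assert (Hind : (Cmod (Cpsum u (M + n) - Cpsum u M) <= K * q ^ M * (1 - q ^ n) / (1 - q))%R).
  { induction n.
    - rewrite Nat.add_0_r. replace (Cpsum u M - Cpsum u M) with (RtoC 0) by ring. rewrite Cmod_0.
      simpl. replace (K * q ^ M * (1 - 1) / (1 - q))%R with 0%R by (field; lra). lra.
    - rewrite Nat.add_succ_r. simpl.
      replace (Cpsum u (M + n) + u (M + n)%nat - Cpsum u M) with ((Cpsum u (M + n) - Cpsum u M) + u (M+n)%nat) by ring.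
      eapply Rle_trans. apply Cmod_triangle.
      eapply Rle_trans. apply Rplus_le_compat. apply IHn. apply Hu.
      rewrite pow_add. right. field. lra. }
  eapply Rle_trans. apply Hind.
  unfold Rdiv. apply Rmult_le_compat_r. { left; apply Rinv_0_lt_compat; lra. }
  assert (0 <= q ^ n)%R by (apply pow_le; lra).
  assert (0 <= K * q ^ M)%R by (apply Rmult_le_pos; auto; apply pow_le; lra).
  nra.
Qed.

Lemma pow_small (q y : R) : (0 <= q < 1)%R -> (0 < y)%R -> exists N, forall n, (N <= n)%nat -> (q ^ n < y)%R.
Proof.
  intros Hq Hy. destruct (pow_lt_1_zero q ltac:(rewrite Rabs_pos_eq; lra) y Hy) as [N HN].
  exists N. intros n Hn. specialize (HN n Hn). rewrite Rabs_pos_eq in HN; auto. apply pow_le; lra.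
Qed.

Lemma geo_HasSum (u : nat -> C) (q K : R) :
  (0 <= q < 1)%R -> (forall j, (Cmod (u j) <= K * q ^ j)%R) ->
  exists l, HasSum u l /\ forall M, (Cmod (l - Cpsum u M) <= K * q ^ M / (1 - q))%R.
Proof.
  intros Hq Hu.
  assert (HK : (0 <= K)%R). { specialize (Hu O). simpl in Hu. pose proof (Cmod_ge_0 (u O)). lra. }
  assert (Hc : exists l, CV (Cpsum u) l).
  { apply CV_Cauchy. intros eps Heps.
    destruct (pow_small q (eps * (1 - q) / (2 * (K + 1)))) as [N HN]; auto.
    { apply Rdiv_lt_0_compat; nra. }
    exists N. intros n m Hn Hm.
    pose proof (geo_bound u q K Hq Hu N (n - N)) as B1.
    pose proof (geo_bound u q K Hq Hu N (m - N)) as B2.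
    replace (N + (n - N))%nat with n in B1 by lia.
    replace (N + (m - N))%nat with m in B2 by lia.
    replace (Cpsum u n - Cpsum u m) with ((Cpsum u n - Cpsum u N) - (Cpsum u m - Cpsum u N)) by ring.
    eapply Rle_lt_trans. unfold Cminus at 1. apply Cmod_triangle. rewrite Cmod_opp.
    specialize (HN N (le_n N)).
    assert (K * q ^ N / (1 - q) < eps / 2)%R.
    { apply Rmult_lt_reg_r with (2 * (K + 1) * / (1 - q))%R.
      { apply Rmult_lt_0_compat. lra. apply Rinv_0_lt_compat; lra. }
      apply Rmult_lt_reg_r with (1 - q)%R. lra.
      replace (K * q ^ N / (1 - q) * (2 * (K + 1) * / (1 - q)) * (1 - q))%R with (2 * K * (K + 1) * q ^ N / (1 - q))%R by (field; lra).
      replace (eps / 2 * (2 * (K + 1) * / (1 - q)) * (1 - q))%R with (eps * (K+1))%R by (field; lra).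
      assert (q ^ N * (2 * (K + 1)) < eps * (1 - q))%R.
      { apply Rmult_lt_reg_r with (/ (2 * (K + 1)))%R. apply Rinv_0_lt_compat; lra.
        replace (q ^ N * (2 * (K + 1)) * / (2 * (K + 1)))%R with (q^N)%R by (field; lra). exact HN. }
      assert (0 <= q ^ N)%R by (apply pow_le; lra).
      apply Rmult_lt_reg_r with (1 - q)%R. lra.
      replace (2 * K * (K + 1) * q ^ N / (1 - q) * (1 - q))%R with (K * (q ^ N * (2 * (K + 1))))%R by (field; lra).
      nra. }
    lra. }
  destruct Hc as [l Hl]. exists l. split; auto.
  intros M. apply (CV_le (Cpsum u) l (Cpsum u M) _ M Hl).
  intros n Hn. replace n with (M + (n - M))%nat by lia. apply geo_bound; auto.
Qed.

Lemma CV_pow (q : R) : (0 <= q < 1)%R -> CV (fun n => Cpown (RtoC q) n) 0.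
Proof.
  intros Hq eps Heps. destruct (pow_small q eps Hq Heps) as [N HN]. exists N. intros n Hn.
  replace (Cpown (RtoC q) n - 0) with (Cpown (RtoC q) n) by ring.
  rewrite Cmod_Cpown_R by lra. auto.
Qed.

Lemma HasSum_geom (q : R) : (0 <= q < 1)%R -> HasSum (fun n => Cpown (RtoC q) n) (/ (1 - RtoC q)).
Proof.
  intros Hq.
  assert (Hne : 1 - RtoC q <> 0).
  { intro E. assert (Re (1 - RtoC q) = 0%R) by (rewrite E; reflexivity). simpl in H. lra. }
  apply (CV_ext (fun n => (1 - Cpown (RtoC q) n) / (1 - RtoC q))).
  { intros n. induction n; simpl. field; auto. rewrite <- IHn. field; auto. }
  eapply CV_eq_l. apply (CV_div _ _ (1 - 0) (1 - RtoC q) Hne). apply CV_minus. apply CV_const. apply CV_pow; auto. apply CV_const.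
  field; auto.
Qed.

Lemma CV_psum (f : nat -> nat -> C) (g : nat -> C) M :
  (forall n, CV (fun N => f N n) (g n)) -> CV (fun N => Cpsum (f N) M) (Cpsum g M).
Proof.
  intros H. induction M; simpl. apply CV_const. apply CV_plus; auto.
Qed.

Lemma dominated (f : nat -> nat -> C) (g : nat -> C) (q K : R) :
  (0 <= q < 1)%R -> (forall N n, (Cmod (f N n) <= K * q ^ n)%R) ->
  (forall n, CV (fun N => f N n) (g n)) ->
  HasSum g (Csum g) /\ (forall N, HasSum (f N) (Csum (f N))) /\ CV (fun N => Csum (f N)) (Csum g).
Proof.
  intros Hq Hb Hc.
  assert (HK : (0 <= K)%R). { specialize (Hb O O). simpl in Hb. pose proof (Cmod_ge_0 (f O O)). lra. }
  assert (Hg : forall n, (Cmod (g n) <= K * q ^ n)%R).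
  { intros n. replace (g n) with (g n - 0) by ring. apply (CV_le _ _ _ _ 0 (Hc n)).
    intros. replace (f n0 n - 0) with (f n0 n) by ring. auto. }
  destruct (geo_HasSum g q K Hq Hg) as [lg [Hlg Tg]].
  assert (Hf : forall N, exists l, HasSum (f N) l /\ forall M, (Cmod (l - Cpsum (f N) M) <= K * q ^ M / (1 - q))%R).
  { intros N. apply geo_HasSum; auto. }
  rewrite (HasSum_Csum _ _ Hlg).
  split; auto.
  split. { intros N. destruct (Hf N) as [l [Hl _]]. rewrite (HasSum_Csum _ _ Hl). auto. }
  intros eps Heps.
  destruct (pow_small q (eps * (1 - q) / (3 * (K + 1)))) as [M HM]; auto.
  { apply Rdiv_lt_0_compat; nra. }
  specialize (HM M (le_n M)).
  assert (Ht : (K * q ^ M / (1 - q) < eps / 3)%R).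
  { assert (0 <= q ^ M)%R by (apply pow_le; lra).
    assert (q ^ M * (3 * (K + 1)) < eps * (1 - q))%R.
    { apply Rmult_lt_reg_r with (/ (3 * (K + 1)))%R. apply Rinv_0_lt_compat; lra.
      replace (q ^ M * (3 * (K + 1)) * / (3 * (K + 1)))%R with (q^M)%R by (field; lra). exact HM. }
    apply Rmult_lt_reg_r with (3 * (1 - q))%R. lra.
    replace (K * q ^ M / (1 - q) * (3 * (1 - q)))%R with (3 * K * q ^ M)%R by (field; lra).
    replace (eps / 3 * (3 * (1 - q)))%R with (eps * (1 - q))%R by field. nra. }
  destruct (CV_psum f g M Hc (eps/3)%R) as [N0 HN0]. lra.
  exists N0. intros N HN. specialize (HN0 N HN).
  destruct (Hf N) as [l [Hl Tl]]. rewrite (HasSum_Csum _ _ Hl).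
  specialize (Tl M). specialize (Tg M).
  replace (l - lg) with ((l - Cpsum (f N) M) + (Cpsum (f N) M - Cpsum g M) - (lg - Cpsum g M)) by ring.
  eapply Rle_lt_trans. unfold Cminus at 1. apply Cmod_triangle. rewrite Cmod_opp.
  eapply Rle_lt_trans. apply Rplus_le_compat_r. apply Cmod_triangle.
  lra.
Qed.


Lemma exp_le_mono (a b : R) : (a <= b)%R -> (exp a <= exp b)%R.
Proof. intros [H|H]. left; apply exp_increasing; auto. subst; lra. Qed.

Lemma qpoch_add (x q : C) k n : qpoch x q (k + n) = qpoch x q k * qpoch (x * Cpown q k) q n.
Proof.
  induction n. rewrite Nat.add_0_r. simpl. ring.
  rewrite Nat.add_succ_r. simpl. rewrite IHn, Cpown_add. ring.
Qed.

Lemma qpoch_S1 (x q : C) n : qpoch x q (S n) = (1 - x) * qpoch (x * q) q n.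
Proof.
  replace (S n) with (1 + n)%nat by lia. rewrite qpoch_add. simpl.
  replace (x * (1 * q)) with (x * q) by ring. ring.
Qed.

Lemma qpoch_zero (q : C) n : qpoch 0 q n = 1.
Proof. induction n; simpl; auto. rewrite IHn. ring. Qed.

Lemma qpoch_nz_fin (x q : C) k : (forall n, x * Cpown q n <> 1) -> qpoch x q k <> 0.
Proof.
  intros H. induction k; simpl. apply C1_nz. apply Cmult_neq_0; auto.
  intro E. apply (H k). replace (x * Cpown q k) with (1 - (1 - x * Cpown q k)) by ring. rewrite E. ring.
Qed.

Lemma Cpsum_tele (g : nat -> C) n : Cpsum (fun j => g (S j) - g j) n = g n - g O.
Proof. induction n. simpl. ring. simpl. rewrite IHn. ring. Qed.

Lemma pow_le_one (q : R) n : (0 <= q <= 1)%R -> (q ^ n <= 1)%R.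
Proof. intros H. induction n; simpl. lra. assert (0 <= q ^ n)%R by (apply pow_le; lra). nra. Qed.

Section Prod.
Variable q : R.
Hypothesis Hq : (0 < q < 1)%R.
Notation qc := (RtoC q).

Definition Eb (s : R) := exp (s / (1 - q)).

Lemma Eb_pos s : (0 < Eb s)%R.
Proof. apply exp_pos. Qed.

Lemma qpoch_bound_aux (x : C) n : (Cmod (qpoch x qc n) <= exp (Cmod x * (1 - q ^ n) / (1 - q)))%R.
Proof.
  induction n; simpl.
  - rewrite Cmod_1. replace (Cmod x * (1 - 1) / (1 - q))%R with 0%R by (field; lra). rewrite exp_0. lra.
  - rewrite Cmod_mult.
    assert (H1 : (Cmod (1 - x * Cpown qc n) <= exp (Cmod x * q ^ n))%R).
    { eapply Rle_trans. unfold Cminus. apply Cmod_triangle. rewrite Cmod_opp, Cmod_1, Cmod_mult, Cmod_Cpown_R by lra.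
      apply exp_ineq1_le. }
    eapply Rle_trans. apply Rmult_le_compat; try apply Cmod_ge_0. apply IHn. apply H1.
    rewrite <- exp_plus. apply exp_le_mono. right. field. lra.
Qed.

Lemma qpoch_bound (x : C) n : (Cmod (qpoch x qc n) <= Eb (Cmod x))%R.
Proof.
  eapply Rle_trans. apply qpoch_bound_aux. apply exp_le_mono. unfold Rdiv.
  apply Rmult_le_compat_r. left; apply Rinv_0_lt_compat; lra.
  assert (0 < q ^ n)%R by (apply pow_lt; lra). pose proof (Cmod_ge_0 x). nra.
Qed.

Lemma qpoch_diff (x : C) n : (Cmod (qpoch x qc (S n) - qpoch x qc n) <= (Cmod x * Eb (Cmod x)) * q ^ n)%R.
Proof.
  simpl. replace (qpoch x qc n * (1 - x * Cpown qc n) - qpoch x qc n) with (- (x * Cpown qc n * qpoch x qc n)) by ring.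
  rewrite Cmod_opp, !Cmod_mult, Cmod_Cpown_R by lra.
  pose proof (qpoch_bound x n). pose proof (Cmod_ge_0 x). assert (0 < q ^ n)%R by (apply pow_lt; lra).
  replace (Cmod x * Eb (Cmod x) * q ^ n)%R with (Cmod x * q ^ n * Eb (Cmod x))%R by ring.
  apply Rmult_le_compat_l; auto. nra.
Qed.

Lemma qinf_CV_tail (x : C) : CV (qpoch x qc) (qpoch_inf x qc) /\
  forall M, (Cmod (qpoch_inf x qc - qpoch x qc M) <= Cmod x * Eb (Cmod x) * q ^ M / (1 - q))%R.
Proof.
  destruct (geo_HasSum (fun n => qpoch x qc (S n) - qpoch x qc n) q (Cmod x * Eb (Cmod x))) as [l [Hl Hb]].
  lra. apply qpoch_diff.
  assert (Htel : forall n, qpoch x qc n = 1 + Cpsum (fun n => qpoch x qc (S n) - qpoch x qc n) n).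
  { intros n. rewrite Cpsum_tele. simpl. ring. }
  assert (HC : CV (qpoch x qc) (1 + l)).
  { apply (CV_ext (fun n => 1 + Cpsum (fun n => qpoch x qc (S n) - qpoch x qc n) n)).
    intros; rewrite Htel; auto. apply CV_plus. apply CV_const. exact Hl. }
  assert (E : qpoch_inf x qc = 1 + l). { apply CV_Clim. auto. }
  rewrite E. split; auto. intros M. rewrite Htel.
  replace (1 + l - (1 + Cpsum (fun n : nat => qpoch x qc (S n) - qpoch x qc n) M)) with
    (l - Cpsum (fun n : nat => qpoch x qc (S n) - qpoch x qc n) M) by ring. apply Hb.
Qed.

Lemma qinf_CV (x : C) : CV (qpoch x qc) (qpoch_inf x qc).
Proof. apply qinf_CV_tail. Qed.

Lemma qinf_shift (x : C) k : qpoch_inf x qc = qpoch x qc k * qpoch_inf (x * Cpown qc k) qc.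
Proof.
  apply (CV_unique (fun n => qpoch x qc (n + k))).
  - apply CV_shift. apply qinf_CV.
  - apply (CV_ext (fun n => qpoch x qc k * qpoch (x * Cpown qc k) qc n)).
    intros n. rewrite Nat.add_comm, qpoch_add. auto.
    apply CV_scal. apply qinf_CV.
Qed.

Lemma qinf_S (x : C) : qpoch_inf x qc = (1 - x) * qpoch_inf (x * qc) qc.
Proof. rewrite (qinf_shift x 1). simpl. replace (x * (1 * qc)) with (x * qc) by ring. ring. Qed.

Lemma qinf_zero : qpoch_inf 0 qc = 1.
Proof. apply CV_Clim. apply (CV_ext (fun _ => 1)). intros; rewrite qpoch_zero; auto. apply CV_const. Qed.

Lemma qinf_bound (x : C) : (Cmod (qpoch_inf x qc) <= Eb (Cmod x))%R.
Proof.
  replace (qpoch_inf x qc) with (qpoch_inf x qc - 0) by ring.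
  apply (CV_le _ _ _ _ 0 (qinf_CV x)). intros. replace (qpoch x qc n - 0) with (qpoch x qc n) by ring.
  apply qpoch_bound.
Qed.

Lemma qinf_near1 (x : C) : (Cmod (qpoch_inf x qc - 1) <= Cmod x * Eb (Cmod x) / (1 - q))%R.
Proof. destruct (qinf_CV_tail x) as [_ H]. specialize (H O). simpl in H. rewrite Rmult_1_r in H. exact H. Qed.

Lemma Eb_le1 (s : R) : (0 <= s <= 1)%R -> (Eb s <= Eb 1)%R.
Proof.
  intros Hs. unfold Eb. apply exp_le_mono. unfold Rdiv. apply Rmult_le_compat_r.
  left; apply Rinv_0_lt_compat; lra. lra.
Qed.

Definition del := Rmin 1 ((1 - q) / (2 * Eb 1)).

Lemma del_pos : (0 < del)%R.
Proof. unfold del. apply Rmin_pos. lra. apply Rdiv_lt_0_compat. lra. pose proof (Eb_pos 1). lra. Qed.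

Lemma qinf_near1_small (x : C) : (Cmod x <= del)%R -> (Cmod (qpoch_inf x qc - 1) <= Cmod x * (1 / (2 * del)))%R.
Proof.
  intros Hx. eapply Rle_trans. apply qinf_near1.
  pose proof (Cmod_ge_0 x). pose proof del_pos.
  assert (Hd1 : (del <= 1)%R) by apply Rmin_l.
  assert (Hd2 : (del <= (1 - q) / (2 * Eb 1))%R) by apply Rmin_r.
  pose proof (Eb_pos 1).
  assert (HE : (Eb (Cmod x) <= Eb 1)%R) by (apply Eb_le1; lra).
  unfold Rdiv. rewrite Rmult_assoc. apply Rmult_le_compat_l; auto.
  rewrite Rmult_1_l.
  apply Rle_trans with (Eb 1 * / (1 - q))%R.
  { apply Rmult_le_compat_r. left; apply Rinv_0_lt_compat; lra. auto. }
  assert (del * (2 * Eb 1) <= 1 - q)%R.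
  { apply Rmult_le_reg_r with (/ (2 * Eb 1))%R. apply Rinv_0_lt_compat; lra.
    replace (del * (2 * Eb 1) * / (2 * Eb 1))%R with del by (field; lra). exact Hd2. }
  apply Rmult_le_reg_r with ((1 - q) * (2 * del))%R. nra.
  replace (Eb 1 * / (1 - q) * ((1 - q) * (2 * del)))%R with (del * (2 * Eb 1))%R by (field; lra).
  replace (/ (2 * del) * ((1 - q) * (2 * del)))%R with (1 - q)%R by (field; lra). lra.
Qed.

Lemma qinf_nz_small (x : C) : (Cmod x <= del)%R -> qpoch_inf x qc <> 0.
Proof.
  intros Hx E. pose proof (qinf_near1_small x Hx). rewrite E in H.
  replace (0 - 1) with (- (1)) in H by ring. rewrite Cmod_opp, Cmod_1 in H.
  pose proof del_pos. assert (Hd1 : (del <= 1)%R) by apply Rmin_l.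
  pose proof (Cmod_ge_0 x).
  assert (Cmod x * (1 / (2 * del)) <= 1/2)%R.
  { apply Rmult_le_reg_r with (2 * del)%R. lra.
    replace (Cmod x * (1 / (2 * del)) * (2 * del))%R with (Cmod x) by (field; lra). nra. }
  lra.
Qed.

Lemma small_index (x : C) : exists k, (Cmod (x * Cpown qc k) <= del)%R.
Proof.
  destruct (pow_small q (del / (Cmod x + 1))) as [k Hk]. lra.
  { apply Rdiv_lt_0_compat. apply del_pos. pose proof (Cmod_ge_0 x); lra. }
  exists k. specialize (Hk k (le_n k)). rewrite Cmod_mult, Cmod_Cpown_R by lra.
  pose proof (Cmod_ge_0 x). pose proof del_pos. assert (0 < q ^ k)%R by (apply pow_lt; lra).
  assert (q ^ k * (Cmod x + 1) < del)%R.
  { apply Rmult_lt_reg_r with (/ (Cmod x + 1))%R. apply Rinv_0_lt_compat; lra.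
    replace (q ^ k * (Cmod x + 1) * / (Cmod x + 1))%R with (q ^ k)%R by (field; lra). exact Hk. }
  nra.
Qed.

Lemma qinf_nz (x : C) : (forall n, x * Cpown qc n <> 1) -> qpoch_inf x qc <> 0.
Proof.
  intros H. destruct (small_index x) as [k Hk]. rewrite (qinf_shift x k).
  apply Cmult_neq_0. apply qpoch_nz_fin; auto. apply qinf_nz_small; auto.
Qed.

Lemma qinf_nz_lt1 (x : C) : (Cmod x < 1)%R -> qpoch_inf x qc <> 0.
Proof.
  intros Hx. apply qinf_nz. intros n E.
  assert (Cmod (x * Cpown qc n) = 1%R) by (rewrite E; apply Cmod_1).
  rewrite Cmod_mult, Cmod_Cpown_R in H by lra.
  assert (q ^ n <= 1)%R by (apply pow_le_one; lra). pose proof (Cmod_ge_0 x).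
  assert (0 < q ^ n)%R by (apply pow_lt; lra). nra.
Qed.

Lemma qinf_zero_inv (x : C) : qpoch_inf x qc = 0 -> exists n, x * Cpown qc n = 1.
Proof.
  intros H. apply NNPP. intro Hn. apply (qinf_nz x); auto.
  intros n E. apply Hn. exists n. auto.
Qed.

Lemma qinf_fin_zero (x : C) k : qpoch x qc k = 0 -> qpoch_inf x qc = 0.
Proof. intros H. rewrite (qinf_shift x k), H. ring. Qed.

Lemma qinf_cont0 (z : nat -> C) : CV z 0 -> CV (fun n => qpoch_inf (z n) qc) 1.
Proof.
  intros Hz eps Heps.
  pose proof del_pos.
  destruct (Hz (Rmin del (eps * del))) as [N HN].
  { apply Rmin_pos; nra. }
  exists N. intros n Hn. specialize (HN n Hn).
  replace (z n - 0) with (z n) in HN by ring.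
  assert (Hd : (Cmod (z n) <= del)%R) by (pose proof (Rmin_l del (eps * del)); lra).
  assert (He : (Cmod (z n) < eps * del)%R) by (pose proof (Rmin_r del (eps * del)); lra).
  eapply Rle_lt_trans. apply qinf_near1_small; auto.
  apply Rmult_lt_reg_r with (2 * del)%R. lra.
  replace (Cmod (z n) * (1 / (2 * del)) * (2 * del))%R with (Cmod (z n)) by (field; lra).
  nra.
Qed.

End Prod.


Section AV.
Variable q : R.
Hypothesis Hq : (0 < q < 1)%R.
Notation qc := (RtoC q).

Lemma qc_nz : qc <> 0.
Proof. intro E. assert (Re qc = Re 0) by (rewrite E; auto). simpl in H. lra. Qed.

Lemma omq_nz : 1 - qc <> 0.
Proof. intro E. assert (Re (1 - qc) = Re 0) by (rewrite E; auto). simpl in H. lra. Qed.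

Definition W (a b c d t : C) : C :=
  qpoch_inf (qc * t / c) qc * qpoch_inf (qc * t / d) qc / (qpoch_inf (a * t) qc * qpoch_inf (b * t) qc).

Definition J (a b c d : C) : C := qint qc (W a b c d) c d.

Lemma CV_geo0 (y : C) : CV (fun n => y * Cpown qc n) 0.
Proof. eapply CV_eq_l. apply CV_scal. apply CV_pow. lra. ring. Qed.

Lemma CV_div_grid (k x c : C) : CV (fun n => k * (x * Cpown qc n) / c) 0.
Proof.
  apply (CV_ext (fun n => (k * x / c) * Cpown qc n)). intros; unfold Cdiv; ring. apply CV_geo0.
Qed.

Lemma CV_mul_grid (k x : C) : CV (fun n => k * (x * Cpown qc n)) 0.
Proof. apply (CV_ext (fun n => (k * x) * Cpown qc n)). intros; ring. apply CV_geo0. Qed.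

Lemma W_CV0 (a b c d x : C) : CV (fun n => W a b c d (x * Cpown qc n)) 1.
Proof.
  unfold W. eapply CV_eq_l. apply (CV_div _ _ (1 * 1) (1 * 1)).
  - replace (1 * 1) with (RtoC 1) by ring. apply C1_nz.
  - apply CV_mult; apply qinf_cont0; auto; apply CV_div_grid.
  - apply CV_mult; apply qinf_cont0; auto; apply CV_mul_grid.
  - field.
Qed.

Lemma jack_has (F : C -> C) x L : CV (fun n => F (x * Cpown qc n)) L ->
  HasSum (fun n => F (x * Cpown qc n) * Cpown qc n) (Csum (fun n => F (x * Cpown qc n) * Cpown qc n)).
Proof.
  intros H. destruct (CV_bounded _ _ H) as [K HK].
  destruct (geo_HasSum (fun n => F (x * Cpown qc n) * Cpown qc n) q K) as [l [Hl _]]. lra.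
  { intros j. rewrite Cmod_mult, Cmod_Cpown_R by lra. apply Rmult_le_compat_r. apply pow_le; lra. auto. }
  rewrite (HasSum_Csum _ _ Hl). auto.
Qed.

Lemma grid_nz (y : C) n : qpoch_inf y qc <> 0 -> qpoch_inf (y * Cpown qc n) qc <> 0.
Proof. intros H E. apply H. rewrite (qinf_shift q Hq y n), E. ring. Qed.

Lemma grid_nz' (a x : C) n : qpoch_inf (a * x) qc <> 0 -> qpoch_inf (a * (x * Cpown qc n)) qc <> 0.
Proof. intros H. rewrite Cmult_assoc. apply grid_nz; auto. Qed.

Lemma Cmult_neq_0_inv (x y : C) : x * y <> 0 -> x <> 0 /\ y <> 0.
Proof. intros H. split; intro E; apply H; rewrite E; ring. Qed.

Lemma Cminus_0_eq (x y : C) : x - y = 0 -> x = y.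
Proof. intros H. replace x with ((x - y) + y) by ring. rewrite H. ring. Qed.

Definition g (a b c d t : C) : C :=
  qpoch_inf (t / c) qc * qpoch_inf (t / d) qc / (qpoch_inf (a * t) qc * qpoch_inf (b * t) qc).

Lemma g_point (a b c d t : C) : c <> 0 -> d <> 0 -> qpoch_inf (a * t) qc <> 0 -> qpoch_inf (b * t) qc <> 0 ->
  g a b c d t - g a b c d (t * qc) =
  W a b c d t * ((a + b - / c - / d) * t + (/ (c * d) - a * b) * (t * t)).
Proof.
  intros Hc Hd Ha Hb. unfold g, W.
  rewrite (qinf_S q Hq (t / c)), (qinf_S q Hq (t / d)), (qinf_S q Hq (a * t)), (qinf_S q Hq (b * t)) in *.
  replace (t / c * qc) with (qc * t / c) by (unfold Cdiv; ring).
  replace (t / d * qc) with (qc * t / d) by (unfold Cdiv; ring).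
  replace (t * qc / c) with (qc * t / c) by (unfold Cdiv; ring).
  replace (t * qc / d) with (qc * t / d) by (unfold Cdiv; ring).
  replace (a * (t * qc)) with (a * t * qc) by ring.
  replace (b * (t * qc)) with (b * t * qc) by ring.
  apply Cmult_neq_0_inv in Ha. apply Cmult_neq_0_inv in Hb.
  destruct Ha as [Ha1 Ha2]. destruct Hb as [Hb1 Hb2].
  field. repeat split; auto.
Qed.

Lemma W_aq (a b c d t : C) : qpoch_inf (a * t) qc <> 0 -> qpoch_inf (b * t) qc <> 0 ->
  W (a * qc) b c d t = (1 - a * t) * W a b c d t.
Proof.
  intros Ha Hb. unfold W. rewrite (qinf_S q Hq (a * t)) in *.
  replace (a * qc * t) with (a * t * qc) by ring.
  apply Cmult_neq_0_inv in Ha. destruct Ha as [Ha1 Ha2].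
  field. auto.
Qed.

Lemma CV_div_grid1 (x c : C) : CV (fun n => (x * Cpown qc n) / c) 0.
Proof.
  apply (CV_ext (fun n => (x / c) * Cpown qc n)). intros; unfold Cdiv; ring. apply CV_geo0.
Qed.

Lemma g_CV0 (a b c d x : C) : CV (fun n => g a b c d (x * Cpown qc n)) 1.
Proof.
  unfold g. eapply CV_eq_l. apply (CV_div _ _ (1 * 1) (1 * 1)).
  - replace (1 * 1) with (RtoC 1) by ring. apply C1_nz.
  - apply CV_mult; apply qinf_cont0; auto; apply CV_div_grid1.
  - apply CV_mult; apply qinf_cont0; auto; apply CV_mul_grid.
  - field.
Qed.

Lemma grid_facts (a b c d x : C) : c <> 0 -> d <> 0 ->
  qpoch_inf (a * x) qc <> 0 -> qpoch_inf (b * x) qc <> 0 ->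
  qpoch_inf (x / c) qc * qpoch_inf (x / d) qc = 0 ->
  exists A B, qint0 qc (W a b c d) x = x * (1 - qc) * A /\
    qint0 qc (fun t => t * W a b c d t) x = x * (1 - qc) * B /\
    qint0 qc (W (a * qc) b c d) x = x * (1 - qc) * (A - a * B) /\
    (a + b - / c - / d) * x * A + (/ (c * d) - a * b) * x * B = -1.
Proof.
  intros Hc Hd Ha Hb Hz.
  set (A := Csum (fun n => W a b c d (x * Cpown qc n) * Cpown qc n)).
  set (B := Csum (fun n => (fun t => t * W a b c d t) (x * Cpown qc n) * Cpown qc n)).
  assert (HA : HasSum (fun n => W a b c d (x * Cpown qc n) * Cpown qc n) A).
  { apply (jack_has (W a b c d) x 1). apply W_CV0. }
  assert (HB : HasSum (fun n => (fun t => t * W a b c d t) (x * Cpown qc n) * Cpown qc n) B).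
  { apply (jack_has (fun t => t * W a b c d t) x (0 * 1)). apply CV_mult. apply CV_geo0. apply W_CV0. }
  exists A, B. split; [reflexivity|]. split; [reflexivity|]. split.
  - unfold qint0. f_equal. apply HasSum_Csum.
    apply (HasSum_ext (fun n => W a b c d (x * Cpown qc n) * Cpown qc n - a * ((fun t => t * W a b c d t) (x * Cpown qc n) * Cpown qc n))).
    { intros n. rewrite W_aq. ring. apply grid_nz'; auto. apply grid_nz'; auto. }
    apply HasSum_minus; auto. apply HasSum_scal; auto.
  - set (al := a + b - / c - / d). set (be := / (c * d) - a * b).
    assert (HT : HasSum (fun n => g a b c d (x * Cpown qc n) - g a b c d (x * Cpown qc (S n))) (g a b c d (x * Cpown qc 0) - 1)).
    { apply HasSum_telescope. apply g_CV0. }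
    assert (Hg0 : g a b c d (x * Cpown qc 0) = 0).
    { simpl. rewrite Cmult_1_r. unfold g. rewrite Hz. unfold Cdiv. ring. }
    rewrite Hg0 in HT.
    assert (HT2 : HasSum (fun n => x * (al * (W a b c d (x * Cpown qc n) * Cpown qc n) + be * ((fun t => t * W a b c d t) (x * Cpown qc n) * Cpown qc n))) (x * (al * A + be * B))).
    { apply HasSum_scal. apply HasSum_plus; apply HasSum_scal; auto. }
    assert (E : x * (al * A + be * B) = 0 - 1).
    { apply (CV_unique (Cpsum (fun n => g a b c d (x * Cpown qc n) - g a b c d (x * Cpown qc (S n))))); auto.
      apply (HasSum_ext _ _ _ (fun n => eq_refl) ) in HT2.
      eapply HasSum_ext; [|exact HT2]. intros n. simpl Cpown.
      replace (x * (Cpown qc n * qc)) with ((x * Cpown qc n) * qc) by ring.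
      rewrite g_point; auto. fold al be. ring.
      apply grid_nz'; auto. apply grid_nz'; auto. }
    transitivity (x * (al * A + be * B)). ring. rewrite E. ring.
Qed.

Lemma step_a (a b c d : C) : c <> 0 -> d <> 0 ->
  qpoch_inf (a * c) qc <> 0 -> qpoch_inf (a * d) qc <> 0 ->
  qpoch_inf (b * c) qc <> 0 -> qpoch_inf (b * d) qc <> 0 ->
  (1 - a * b * c * d) * J (a * qc) b c d = (1 - a * c) * (1 - a * d) * J a b c d.
Proof.
  intros Hc Hd Hac Had Hbc Hbd.
  assert (Zc : qpoch_inf (c / c) qc * qpoch_inf (c / d) qc = 0).
  { replace (c / c) with (RtoC 1) by (field; auto). rewrite (qinf_S q Hq 1). ring. }
  assert (Zd : qpoch_inf (d / c) qc * qpoch_inf (d / d) qc = 0).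
  { replace (d / d) with (RtoC 1) by (field; auto). rewrite (qinf_S q Hq 1). ring. }
  destruct (grid_facts a b c d c Hc Hd Hac Hbc Zc) as [Ac [Bc [E1c [E2c [E3c E4c]]]]].
  destruct (grid_facts a b c d d Hc Hd Had Hbd Zd) as [Ad [Bd [E1d [E2d [E3d E4d]]]]].
  unfold J, qint. rewrite E1c, E1d, E3c, E3d.
  apply Cminus_0_eq.
  transitivity (- (1 - qc) * a * c * d * (((a + b - / c - / d) * d * Ad + (/ (c * d) - a * b) * d * Bd) - ((a + b - / c - / d) * c * Ac + (/ (c * d) - a * b) * c * Bc))).
  - field. split; auto.
  - rewrite E4c, E4d. ring.
Qed.

Lemma W_sym (a b c d : C) : W a b c d = W b a c d.
Proof. apply functional_extensionality. intros t. unfold W. rewrite (Cmult_comm (qpoch_inf (a * t) qc)). auto. Qed.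

Lemma J_sym (a b c d : C) : J a b c d = J b a c d.
Proof. unfold J. rewrite W_sym. auto. Qed.

Lemma iter_a (a b c d : C) N : c <> 0 -> d <> 0 ->
  qpoch_inf (a * c) qc <> 0 -> qpoch_inf (a * d) qc <> 0 ->
  qpoch_inf (b * c) qc <> 0 -> qpoch_inf (b * d) qc <> 0 ->
  J (a * Cpown qc N) b c d * qpoch (a * b * c * d) qc N = J a b c d * qpoch (a * c) qc N * qpoch (a * d) qc N.
Proof.
  intros Hc Hd Hac Had Hbc Hbd. induction N.
  - cbn [qpoch Cpown]. replace (a * 1) with a by ring. ring.
  - set (a' := a * Cpown qc N).
    assert (S1 := step_a a' b c d Hc Hd).
    assert (Hac' : qpoch_inf (a' * c) qc <> 0).
    { unfold a'. replace (a * Cpown qc N * c) with (a * c * Cpown qc N) by ring. apply grid_nz; auto. }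
    assert (Had' : qpoch_inf (a' * d) qc <> 0).
    { unfold a'. replace (a * Cpown qc N * d) with (a * d * Cpown qc N) by ring. apply grid_nz; auto. }
    specialize (S1 Hac' Had' Hbc Hbd).
    simpl qpoch. replace (a * Cpown qc (S N)) with (a' * qc) by (unfold a'; cbn [Cpown]; ring).
    replace (a * b * c * d * Cpown qc N) with (a' * b * c * d) by (unfold a'; ring).
    replace (a * c * Cpown qc N) with (a' * c) by (unfold a'; ring).
    replace (a * d * Cpown qc N) with (a' * d) by (unfold a'; ring).
    transitivity (qpoch (a * b * c * d) qc N * ((1 - a' * b * c * d) * J (a' * qc) b c d)). ring.
    rewrite S1.
    transitivity ((1 - a' * c) * (1 - a' * d) * (J a' b c d * qpoch (a * b * c * d) qc N)). ring.
    unfold a' at 3. rewrite IHN. ring.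
Qed.

Lemma iter_b (a b c d : C) N : c <> 0 -> d <> 0 ->
  qpoch_inf (a * c) qc <> 0 -> qpoch_inf (a * d) qc <> 0 ->
  qpoch_inf (b * c) qc <> 0 -> qpoch_inf (b * d) qc <> 0 ->
  J a (b * Cpown qc N) c d * qpoch (a * b * c * d) qc N = J a b c d * qpoch (b * c) qc N * qpoch (b * d) qc N.
Proof.
  intros. rewrite J_sym, (J_sym a b). replace (a * b * c * d) with (b * a * c * d) by ring.
  apply iter_a; auto.
Qed.

Lemma iter_ab (a b c d : C) N : c <> 0 -> d <> 0 ->
  qpoch_inf (a * c) qc <> 0 -> qpoch_inf (a * d) qc <> 0 ->
  qpoch_inf (b * c) qc <> 0 -> qpoch_inf (b * d) qc <> 0 ->
  J (a * Cpown qc N) (b * Cpown qc N) c d * qpoch (a * b * c * d) qc (N + N) =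
  J a b c d * qpoch (a * c) qc N * qpoch (a * d) qc N * qpoch (b * c) qc N * qpoch (b * d) qc N.
Proof.
  intros Hc Hd Hac Had Hbc Hbd.
  rewrite qpoch_add.
  set (a' := a * Cpown qc N).
  assert (Hac' : qpoch_inf (a' * c) qc <> 0).
  { unfold a'. replace (a * Cpown qc N * c) with (a * c * Cpown qc N) by ring. apply grid_nz; auto. }
  assert (Had' : qpoch_inf (a' * d) qc <> 0).
  { unfold a'. replace (a * Cpown qc N * d) with (a * d * Cpown qc N) by ring. apply grid_nz; auto. }
  pose proof (iter_b a' b c d N Hc Hd Hac' Had' Hbc Hbd) as E.
  replace (a * b * c * d * Cpown qc N) with (a' * b * c * d) by (unfold a'; ring).
  transitivity (qpoch (a * b * c * d) qc N * (J a' (b * Cpown qc N) c d * qpoch (a' * b * c * d) qc N)). ring.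
  rewrite E.
  transitivity (qpoch (b * c) qc N * qpoch (b * d) qc N * (J a' b c d * qpoch (a * b * c * d) qc N)). ring.
  unfold a'. rewrite iter_a; auto. ring.
Qed.

Lemma inv_bounded (y : C) : exists K, forall m, (Cmod (/ qpoch_inf (y * Cpown qc m) qc) <= K)%R.
Proof.
  apply (CV_bounded _ (/ 1)). apply CV_inv. apply C1_nz. apply qinf_cont0; auto. apply CV_geo0.
Qed.

Lemma W_zero (c d t : C) : W 0 0 c d t = qpoch_inf (qc * t / c) qc * qpoch_inf (qc * t / d) qc.
Proof. unfold W. rewrite Cmult_0_l, (qinf_zero q). field. Qed.

Lemma qint0_lim (a b c d x : C) :
  qpoch_inf (a * x) qc <> 0 -> qpoch_inf (b * x) qc <> 0 ->
  CV (fun N => qint0 qc (W (a * Cpown qc N) (b * Cpown qc N) c d) x) (qint0 qc (W 0 0 c d) x).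
Proof.
  intros Ha Hb.
  destruct (inv_bounded (a * x)) as [Ka HKa].
  destruct (inv_bounded (b * x)) as [Kb HKb].
  set (Num := fun t => qpoch_inf (qc * t / c) qc * qpoch_inf (qc * t / d) qc).
  assert (HNc : CV (fun n => Num (x * Cpown qc n)) (1 * 1)).
  { unfold Num. apply CV_mult; apply qinf_cont0; auto; apply CV_div_grid. }
  destruct (CV_bounded _ _ HNc) as [Kn HKn].
  assert (Hrw : forall N n, W (a * Cpown qc N) (b * Cpown qc N) c d (x * Cpown qc n) * Cpown qc n =
     Num (x * Cpown qc n) * (/ qpoch_inf (a * x * Cpown qc (N + n)) qc * / qpoch_inf (b * x * Cpown qc (N + n)) qc) * Cpown qc n).
  { intros N n. unfold W, Num. rewrite Cpown_add.
    replace (a * Cpown qc N * (x * Cpown qc n)) with (a * x * (Cpown qc N * Cpown qc n)) by ring.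
    replace (b * Cpown qc N * (x * Cpown qc n)) with (b * x * (Cpown qc N * Cpown qc n)) by ring.
    rewrite <- Cpown_add. field. split; apply grid_nz; auto. }
  destruct (dominated (fun N n => W (a * Cpown qc N) (b * Cpown qc N) c d (x * Cpown qc n) * Cpown qc n)
     (fun n => W 0 0 c d (x * Cpown qc n) * Cpown qc n) q (Kn * (Ka * Kb))) as [_ [_ Hlim]].
  - lra.
  - intros N n. rewrite Hrw. rewrite !Cmod_mult, Cmod_Cpown_R by lra.
    apply Rmult_le_compat_r. apply pow_le; lra.
    pose proof (Cmod_ge_0 (Num (x * Cpown qc n))).
    pose proof (Cmod_ge_0 (/ qpoch_inf (a * x * Cpown qc (N + n)) qc)).
    pose proof (Cmod_ge_0 (/ qpoch_inf (b * x * Cpown qc (N + n)) qc)).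
    apply Rmult_le_compat; auto. apply Rmult_le_pos; auto.
    apply Rmult_le_compat; auto.
  - intros n. eapply CV_eq_l.
    apply (CV_ext (fun N => Num (x * Cpown qc n) * (/ qpoch_inf (a * x * Cpown qc (N + n)) qc * / qpoch_inf (b * x * Cpown qc (N + n)) qc) * Cpown qc n)).
    { intros N. rewrite Hrw. auto. }
    apply (CV_ext (fun N => (Num (x * Cpown qc n) * Cpown qc n) * (/ qpoch_inf (a * x * Cpown qc (N + n)) qc * / qpoch_inf (b * x * Cpown qc (N + n)) qc))).
    { intros; ring. }
    apply CV_scal. apply CV_mult.
    + apply (CV_shift (fun m => / qpoch_inf (a * x * Cpown qc m) qc)). apply CV_inv. apply C1_nz. apply qinf_cont0; auto. apply CV_geo0.
    + apply (CV_shift (fun m => / qpoch_inf (b * x * Cpown qc m) qc)). apply CV_inv. apply C1_nz. apply qinf_cont0; auto. apply CV_geo0.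
    + rewrite W_zero. unfold Num. field.
  - unfold qint0. apply CV_scal. exact Hlim.
Qed.

Lemma AV_A (a b c d : C) : c <> 0 -> d <> 0 ->
  qpoch_inf (a * c) qc <> 0 -> qpoch_inf (a * d) qc <> 0 ->
  qpoch_inf (b * c) qc <> 0 -> qpoch_inf (b * d) qc <> 0 ->
  J a b c d * (qpoch_inf (a * c) qc * qpoch_inf (a * d) qc * qpoch_inf (b * c) qc * qpoch_inf (b * d) qc)
  = qpoch_inf (a * b * c * d) qc * J 0 0 c d.
Proof.
  intros Hc Hd Hac Had Hbc Hbd.
  apply (CV_unique (fun N => J (a * Cpown qc N) (b * Cpown qc N) c d * qpoch (a * b * c * d) qc (N + N))).
  - apply (CV_ext (fun N => J a b c d * (qpoch (a * c) qc N * qpoch (a * d) qc N * qpoch (b * c) qc N * qpoch (b * d) qc N))).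
    { intros N. rewrite iter_ab; auto. ring. }
    apply CV_scal. repeat apply CV_mult; apply qinf_CV; auto.
  - rewrite (Cmult_comm (qpoch_inf (a * b * c * d) qc)). apply CV_mult.
    + unfold J, qint. apply CV_minus; apply qint0_lim; auto.
    + apply (CV_subseq (qpoch (a * b * c * d) qc) _ (fun N => (N + N)%nat)). intros; lia. apply qinf_CV; auto.
Qed.

End AV.


Section AVB.
Variable q : R.
Hypothesis Hq : (0 < q < 1)%R.
Notation qc := (RtoC q).

Lemma qint0_shift (F : C -> C) (x : C) k S :
  HasSum (fun n => F (x * Cpown qc n) * Cpown qc n) S ->
  (forall m, (m < k)%nat -> F (x * Cpown qc m) = 0) ->
  qint0 qc F (x * Cpown qc k) = qint0 qc F x.
Proof.
  intros HS Hz.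
  assert (Hk : Cpown qc k <> 0) by (apply Cpown_nz; apply qc_nz; auto).
  pose proof (HasSum_shift _ _ k HS) as H1.
  rewrite (Cpsum_ext _ (fun _ => RtoC 0)) in H1.
  2: { intros m Hm. rewrite Hz; auto. ring. }
  assert (Z: forall j, Cpsum (fun _ => RtoC 0) j = 0) by (induction j; simpl; [reflexivity| rewrite IHj; ring]).
  rewrite Z in H1.
  assert (H2 : HasSum (fun n => F (x * Cpown qc k * Cpown qc n) * Cpown qc n) (/ Cpown qc k * (S - 0))).
  { eapply HasSum_ext; [|apply HasSum_scal; exact H1]. intros n. cbv beta.
    rewrite Cpown_add, (Cmult_assoc x). field. auto. }
  unfold qint0. rewrite (HasSum_Csum _ _ H2), (HasSum_Csum _ _ HS). field. auto.
Qed.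

Lemma zero_from (z : C) j : z * Cpown qc j = 1 -> qpoch_inf z qc = 0.
Proof.
  intros H. apply (qinf_fin_zero q Hq z (S j)). simpl. rewrite H. ring.
Qed.

Lemma W00_has (c d x : C) : HasSum (fun n => W q 0 0 c d (x * Cpown qc n) * Cpown qc n) (Csum (fun n => W q 0 0 c d (x * Cpown qc n) * Cpown qc n)).
Proof. apply (jack_has q Hq _ x 1). apply W_CV0; auto. Qed.

Lemma Cmod_qc : Cmod qc = q.
Proof. rewrite Cmod_R. apply Rabs_pos_eq. lra. Qed.

Lemma J00_eval (c d : C) : c <> 0 -> d <> 0 ->
  J q 0 0 c d = d * (1 - qc) * qpoch_inf qc qc * qpoch_inf (d * qc / c) qc * qpoch_inf (c / d) qc.
Proof.
  intros Hc Hd.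
  destruct (classic (qpoch_inf (d * qc / c) qc = 0)) as [HX|HX].
  { rewrite HX. rewrite Cmult_0_r, Cmult_0_l.
    destruct (qinf_zero_inv q Hq _ HX) as [n Hn].
    assert (Ec : c = d * Cpown qc (S n)).
    { transitivity (c * (d * qc / c * Cpown qc n)). rewrite Hn; ring. cbn [Cpown]. field; auto. }
    assert (HZ : forall m, (m < S n)%nat -> W q 0 0 c d (d * Cpown qc m) = 0).
    { intros m Hm. unfold W.
      rewrite (zero_from (qc * (d * Cpown qc m) / c) (n - m)). unfold Cdiv; ring.
      rewrite <- Hn. replace n with (m + (n - m))%nat at 2 by lia. rewrite Cpown_add. field. auto. }
    pose proof (qint0_shift _ d (S n) _ (W00_has c d d) HZ) as Hs.
    rewrite <- Ec in Hs. unfold J, qint. rewrite Hs. ring. }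
  destruct (classic (qpoch_inf (c / d) qc = 0)) as [HY|HY].
  { rewrite HY. rewrite Cmult_0_r.
    destruct (qinf_zero_inv q Hq _ HY) as [n Hn].
    assert (Ed : d = c * Cpown qc n).
    { transitivity (d * (c / d * Cpown qc n)). rewrite Hn; ring. field; auto. }
    assert (HZ : forall m, (m < n)%nat -> W q 0 0 c d (c * Cpown qc m) = 0).
    { intros m Hm. unfold W.
      rewrite (zero_from (qc * (c * Cpown qc m) / d) (n - m - 1)). unfold Cdiv; ring.
      rewrite <- Hn. replace n with (S m + (n - m - 1))%nat at 2 by lia. rewrite Cpown_add. simpl. field. auto. }
    pose proof (qint0_shift _ c n _ (W00_has c d c) HZ) as Hs.
    rewrite <- Ed in Hs. unfold J, qint. rewrite Hs. ring. }
  assert (HY' : qpoch_inf (c / d * qc) qc <> 0).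
  { intro E. apply HY. rewrite (qinf_S q Hq), E. ring. }
  assert (Hqq : qpoch_inf qc qc <> 0). { apply qinf_nz_lt1; auto. rewrite Cmod_qc. lra. }
  assert (Hq2 : qpoch_inf (qc * qc) qc <> 0). { apply qinf_nz_lt1; auto. rewrite Cmod_mult, Cmod_qc. nra. }
  assert (Hqn := qc_nz q Hq).
  pose proof (AV_A q Hq (qc / c) (qc / d) c d Hc Hd) as E.
  replace (qc / c * c) with qc in E by (field; auto).
  replace (qc / c * d) with (d * qc / c) in E by (field; auto).
  replace (qc / d * c) with (c / d * qc) in E by (field; auto).
  replace (qc / d * d) with qc in E by (field; auto).
  replace (qc / c * (qc / d) * c * d) with (qc * qc) in E by (field; auto).
  specialize (E Hqq HX HY' Hqq).
  assert (EJ : J q (qc / c) (qc / d) c d = d - c).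
  { unfold J, qint, qint0.
    assert (Hw : forall x, qpoch_inf (qc / c * x) qc <> 0 -> qpoch_inf (qc / d * x) qc <> 0 ->
        Csum (fun n => W q (qc / c) (qc / d) c d (x * Cpown qc n) * Cpown qc n) = / (1 - qc)).
    { intros x H1 H2. apply HasSum_Csum. eapply HasSum_ext; [|apply (HasSum_geom q); lra].
      intros n. unfold W.
      pose proof (grid_nz' q Hq _ _ n H1). pose proof (grid_nz' q Hq _ _ n H2).
      replace (qc * (x * Cpown qc n) / c) with (qc / c * (x * Cpown qc n)) by (field; auto).
      replace (qc * (x * Cpown qc n) / d) with (qc / d * (x * Cpown qc n)) by (field; auto).
      field. split; auto. }
    rewrite (Hw d), (Hw c).
    - field. apply omq_nz; auto.
    - replace (qc / c * c) with qc by (field; auto). auto.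
    - replace (qc / d * c) with (c / d * qc) by (field; auto). auto.
    - replace (qc / c * d) with (d * qc / c) by (field; auto). auto.
    - replace (qc / d * d) with qc by (field; auto). auto. }
  rewrite EJ in E.
  rewrite (qinf_S q Hq qc) in E |- *. rewrite (qinf_S q Hq (c / d)).
  replace (J q 0 0 c d) with (qpoch_inf (qc * qc) qc * J q 0 0 c d / qpoch_inf (qc * qc) qc) by (field; auto).
  rewrite <- E. field. split; auto.
Qed.

Lemma AV (a b c d : C) : c <> 0 -> d <> 0 ->
  qpoch_inf (a * c) qc <> 0 -> qpoch_inf (a * d) qc <> 0 ->
  qpoch_inf (b * c) qc <> 0 -> qpoch_inf (b * d) qc <> 0 ->
  J q a b c d * (qpoch_inf (a * c) qc * qpoch_inf (a * d) qc * qpoch_inf (b * c) qc * qpoch_inf (b * d) qc)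
  = d * (1 - qc) * qpoch_inf qc qc * qpoch_inf (d * qc / c) qc * qpoch_inf (c / d) qc * qpoch_inf (a * b * c * d) qc.
Proof.
  intros. rewrite AV_A; auto. rewrite J00_eval; auto. ring.
Qed.

End AVB.


Fixpoint Pk (c t q : C) (k : nat) : C :=
  match k with O => 1 | S k' => Pk c t q k' * (t - c * Cpown q k') end.
Fixpoint Dprod (c q : C) (k : nat) : C :=
  match k with O => 1 | S k' => Dprod c q k' * (- (c * Cpown q k')) end.

Lemma qpoch_zero_at (z q : C) m k : (m < k)%nat -> z * Cpown q m = 1 -> qpoch z q k = 0.
Proof.
  intros Hm Hz. replace k with (S m + (k - S m))%nat by lia. rewrite qpoch_add. simpl. rewrite Hz. ring.
Qed.

Section Main.
Variable q : R.
Hypothesis Hq : (0 < q < 1)%R.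
Notation qc := (RtoC q).

Lemma A1 (c t : C) k : t <> 0 -> qpoch (c / t) qc k * Cpown t k = Pk c t qc k.
Proof.
  intros Ht. induction k. simpl. ring.
  simpl. rewrite <- IHk. field. auto.
Qed.

Lemma A2 (c t : C) k : c <> 0 -> Dprod c qc k * qpoch (qc * t / (c * Cpown qc k)) qc k = Pk c t qc k.
Proof.
  intros Hc. assert (Hq0 := qc_nz q Hq).
  induction k. simpl. field. auto.
  rewrite qpoch_S1.
  assert (Hk : Cpown qc k <> 0) by (apply Cpown_nz; auto).
  replace (qc * t / (c * Cpown qc (S k)) * qc) with (qc * t / (c * Cpown qc k)) by (simpl; field; auto).
  simpl Dprod. simpl Pk. rewrite <- IHk.
  simpl Cpown. field. auto.
Qed.

Lemma W_k (a b c d t : C) k : c <> 0 -> t <> 0 ->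
  W q a b c d t * (qpoch (c / t) qc k * Cpown t k) = Dprod c qc k * W q a b (c * Cpown qc k) d t.
Proof.
  intros Hc Ht. assert (Hq0 := qc_nz q Hq).
  assert (Hk : Cpown qc k <> 0) by (apply Cpown_nz; auto).
  rewrite A1 by auto. rewrite <- (A2 c t k Hc).
  unfold W. rewrite (qinf_shift q Hq (qc * t / (c * Cpown qc k)) k).
  replace (qc * t / (c * Cpown qc k) * Cpown qc k) with (qc * t / c) by (field; auto).
  unfold Cdiv. ring.
Qed.

Lemma qint0_ext (F G : C -> C) x : (forall n, F (x * Cpown qc n) = G (x * Cpown qc n)) -> qint0 qc F x = qint0 qc G x.
Proof.
  intros H. unfold qint0. f_equal. f_equal. apply functional_extensionality. intros n. rewrite H. auto.
Qed.

Lemma qint0_scal (D : C) (H : C -> C) x L : CV (fun n => H (x * Cpown qc n)) L ->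
  qint0 qc (fun t => D * H t) x = D * qint0 qc H x.
Proof.
  intros HC. pose proof (jack_has q Hq H x L HC) as HS.
  assert (HS2 : HasSum (fun n => (fun t => D * H t) (x * Cpown qc n) * Cpown qc n)
                (D * Csum (fun n => H (x * Cpown qc n) * Cpown qc n))).
  { eapply HasSum_ext; [|apply HasSum_scal; exact HS]. intros n. cbv beta. ring. }
  unfold qint0. rewrite (HasSum_Csum _ _ HS2). ring.
Qed.

Lemma Pk_CV (c x : C) k : CV (fun n => Pk c (x * Cpown qc n) qc k) (Pk c 0 qc k).
Proof.
  induction k; simpl. apply CV_const. apply CV_mult; auto. apply CV_minus. apply CV_geo0; auto. apply CV_const.
Qed.

Lemma Ik_eval (a b c d : C) k : c <> 0 -> d <> 0 ->
  qint qc (fun t => W q a b c d t * (qpoch (c / t) qc k * Cpown t k)) c d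
  = Dprod c qc k * J q a b (c * Cpown qc k) d.
Proof.
  intros Hc Hd. assert (Hq0 := qc_nz q Hq).
  set (G := fun t => W q a b c d t * (qpoch (c / t) qc k * Cpown t k)).
  assert (Hgrid : forall (x : C) n, x <> 0 -> x * Cpown qc n <> 0).
  { intros x n Hx. apply Cmult_neq_0; auto. apply Cpown_nz; auto. }
  assert (HSc : HasSum (fun n => G (c * Cpown qc n) * Cpown qc n) (Csum (fun n => G (c * Cpown qc n) * Cpown qc n))).
  { apply (jack_has q Hq G c (1 * Pk c 0 qc k)).
    apply (CV_ext (fun n => W q a b c d (c * Cpown qc n) * Pk c (c * Cpown qc n) qc k)).
    { intros n. unfold G. rewrite A1; auto. }
    apply CV_mult. apply W_CV0; auto. apply Pk_CV. }
  assert (Hz : forall m, (m < k)%nat -> G (c * Cpown qc m) = 0).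
  { intros m Hm. unfold G. rewrite (qpoch_zero_at _ _ m k Hm). ring.
    field. split; auto. apply Cpown_nz; auto. }
  pose proof (qint0_shift q Hq G c k _ HSc Hz) as Hs.
  unfold qint. rewrite <- Hs.
  rewrite (qint0_ext G (fun t => Dprod c qc k * W q a b (c * Cpown qc k) d t) d).
  2: { intros n. unfold G. apply W_k; auto. }
  rewrite (qint0_ext G (fun t => Dprod c qc k * W q a b (c * Cpown qc k) d t) (c * Cpown qc k)).
  2: { intros n. unfold G. apply W_k; auto. }
  rewrite (qint0_scal _ _ d 1). 2: apply W_CV0; auto.
  rewrite (qint0_scal _ _ (c * Cpown qc k) 1). 2: apply W_CV0; auto.
  unfold J, qint. ring.
Qed.

Lemma Jk_rel (a b c d : C) k : c <> 0 -> d <> 0 ->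
  qpoch_inf (a * c) qc <> 0 -> qpoch_inf (a * d) qc <> 0 ->
  qpoch_inf (b * c) qc <> 0 -> qpoch_inf (b * d) qc <> 0 ->
  Dprod c qc k * J q a b (c * Cpown qc k) d *
    (qpoch_inf (a * c) qc * qpoch_inf (a * d) qc * qpoch_inf (b * c) qc * qpoch_inf (b * d) qc)
    * qpoch (a * b * c * d) qc k
  = qpoch (a * c) qc k * qpoch (b * c) qc k * Cpown d k *
    (d * (1 - qc) * qpoch_inf qc qc * qpoch_inf (d * qc / c) qc * qpoch_inf (c / d) qc * qpoch_inf (a * b * c * d) qc).
Proof.
  intros Hc Hd Hac Had Hbc Hbd. assert (Hq0 := qc_nz q Hq).
  assert (Hk : Cpown qc k <> 0) by (apply Cpown_nz; auto).
  set (c' := c * Cpown qc k).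
  assert (Hc' : c' <> 0) by (apply Cmult_neq_0; auto).
  assert (Hac' : qpoch_inf (a * c') qc <> 0).
  { unfold c'. rewrite Cmult_assoc. apply grid_nz; auto. }
  assert (Hbc' : qpoch_inf (b * c') qc <> 0).
  { unfold c'. rewrite Cmult_assoc. apply grid_nz; auto. }
  pose proof (AV q Hq a b c' d Hc' Hd Hac' Had Hbc' Hbd) as AV'.
  assert (E_ac : qpoch_inf (a * c) qc = qpoch (a * c) qc k * qpoch_inf (a * c') qc).
  { rewrite (qinf_shift q Hq (a * c) k). unfold c'. rewrite Cmult_assoc. auto. }
  assert (E_bc : qpoch_inf (b * c) qc = qpoch (b * c) qc k * qpoch_inf (b * c') qc).
  { rewrite (qinf_shift q Hq (b * c) k). unfold c'. rewrite Cmult_assoc. auto. }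
  assert (E_cd : qpoch_inf (c / d) qc = qpoch (c / d) qc k * qpoch_inf (c' / d) qc).
  { rewrite (qinf_shift q Hq (c / d) k). unfold c'. replace (c / d * Cpown qc k) with (c * Cpown qc k / d) by (field; auto). auto. }
  assert (E_abcd : qpoch_inf (a * b * c * d) qc = qpoch (a * b * c * d) qc k * qpoch_inf (a * b * c' * d) qc).
  { rewrite (qinf_shift q Hq (a * b * c * d) k). unfold c'. replace (a * b * c * d * Cpown qc k) with (a * b * (c * Cpown qc k) * d) by ring. auto. }
  assert (E_dqc : qpoch_inf (d * qc / c') qc = qpoch (d * qc / c') qc k * qpoch_inf (d * qc / c) qc).
  { rewrite (qinf_shift q Hq (d * qc / c') k). unfold c'. replace (d * qc / (c * Cpown qc k) * Cpown qc k) with (d * qc / c) by (field; auto). auto. }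
  assert (E_D : Dprod c qc k * qpoch (d * qc / c') qc k = qpoch (c / d) qc k * Cpown d k).
  { rewrite A1 by auto. rewrite <- (A2 c d k Hc). unfold c'. replace (d * qc / (c * Cpown qc k)) with (qc * d / (c * Cpown qc k)) by (field; auto). auto. }
  fold c'.
  rewrite E_ac, E_bc, E_cd, E_abcd.
  transitivity (qpoch (a * c) qc k * qpoch (b * c) qc k * qpoch (a * b * c * d) qc k * Dprod c qc k *
    (J q a b c' d * (qpoch_inf (a * c') qc * qpoch_inf (a * d) qc * qpoch_inf (b * c') qc * qpoch_inf (b * d) qc))). ring.
  rewrite AV'. rewrite E_dqc.
  transitivity (qpoch (a * c) qc k * qpoch (b * c) qc k * qpoch (a * b * c * d) qc k * (Dprod c qc k * qpoch (d * qc / c') qc k) *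
    (d * (1 - qc) * qpoch_inf qc qc * qpoch_inf (d * qc / c) qc * qpoch_inf (c' / d) qc * qpoch_inf (a * b * c' * d) qc)). ring.
  rewrite E_D. ring.
Qed.

End Main.


Lemma Cpsum_S0 (f : nat -> C) n : Cpsum f (S n) = f O + Cpsum (fun k => f (S k)) n.
Proof. induction n. simpl. ring. change (Cpsum f (S (S n))) with (Cpsum f (S n) + f (S n)). rewrite IHn. simpl. ring. Qed.

Lemma Cpsum_zero n : Cpsum (fun _ => RtoC 0) n = 0.
Proof. induction n; simpl. reflexivity. rewrite IHn. ring. Qed.

Lemma reindex (h : nat -> nat -> C) N :
  Cpsum (fun k => Cpsum (h k) (N - k)) N = Cpsum (fun m => Cpsum (fun k => h k (m - k)%nat) (S m)) N.
Proof.
  induction N. reflexivity.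
  change (Cpsum (fun k => Cpsum (h k) (S N - k)) (S N)) with
    (Cpsum (fun k => Cpsum (h k) (S N - k)) N + Cpsum (h N) (S N - N)).
  rewrite (Cpsum_ext (fun k => Cpsum (h k) (S N - k)) (fun k => Cpsum (h k) (N - k) + h k (N - k)%nat)).
  2: { intros k Hk. replace (S N - k)%nat with (S (N - k)) by lia. reflexivity. }
  rewrite Cpsum_plus, IHN.
  change (Cpsum (fun m => Cpsum (fun k => h k (m - k)%nat) (S m)) (S N)) with
    (Cpsum (fun m => Cpsum (fun k => h k (m - k)%nat) (S m)) N + Cpsum (fun k => h k (N - k)%nat) (S N)).
  replace (S N - N)%nat with 1%nat by lia.
  change (Cpsum (fun k => h k (N - k)%nat) (S N)) with (Cpsum (fun k => h k (N - k)%nat) N + h N (N - N)%nat).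
  replace (N - N)%nat with O by lia. simpl. ring.
Qed.

Section QB.
Variable q : C.

Fixpoint qbin (m k : nat) : C :=
  match m, k with
  | _, O => 1
  | O, S _ => 0
  | S m', S k' => qbin m' k' + Cpown q (S k') * qbin m' (S k')
  end.

Lemma qbin_gt m k : (m < k)%nat -> qbin m k = 0.
Proof.
  revert k. induction m; intros k Hk; destruct k; try lia. reflexivity.
  simpl. rewrite !IHm by lia. ring.
Qed.

Lemma qbin_fact m k : (k <= m)%nat -> qbin m k * qpoch q q k * qpoch q q (m - k) = qpoch q q m.
Proof.
  revert k. induction m; intros k Hk.
  - destruct k; [|lia]. simpl. ring.
  - destruct k.
    + simpl. ring.
    + simpl qbin. replace (S m - S k)%nat with (m - k)%nat by lia.
      change (qpoch q q (S k)) with (qpoch q q k * (1 - q * Cpown q k)).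
      change (qpoch q q (S m)) with (qpoch q q m * (1 - q * Cpown q m)).
      destruct (Nat.eq_dec k m) as [->|Hne].
      * rewrite (qbin_gt m (S m)) by lia. replace (m - m)%nat with O by lia.
        pose proof (IHm m (le_n m)) as H. replace (m - m)%nat with O in H by lia. cbn [qpoch] in H |- *.
        transitivity ((qbin m m * qpoch q q m * 1) * (1 - q * Cpown q m)). ring. rewrite H. ring.
      * assert (Hk' : (S k <= m)%nat) by lia.
        replace (m - k)%nat with (S (m - S k)) by lia.
        change (qpoch q q (S (m - S k))) with (qpoch q q (m - S k) * (1 - q * Cpown q (m - S k))).
        pose proof (IHm k ltac:(lia)) as H1. pose proof (IHm (S k) Hk') as H2.
        replace (m - k)%nat with (S (m - S k)) in H1 by lia.
        change (qpoch q q (S (m - S k))) with (qpoch q q (m - S k) * (1 - q * Cpown q (m - S k))) in H1.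
        change (qpoch q q (S k)) with (qpoch q q k * (1 - q * Cpown q k)) in H2.
        assert (Hp : Cpown q (S k) * Cpown q (m - S k) = Cpown q m).
        { rewrite <- Cpown_add. f_equal. lia. }
        transitivity ((qbin m k * qpoch q q k * (qpoch q q (m - S k) * (1 - q * Cpown q (m - S k)))) * (1 - q * Cpown q k)
           + Cpown q (S k) * (qbin m (S k) * (qpoch q q k * (1 - q * Cpown q k)) * qpoch q q (m - S k)) * (1 - q * Cpown q (m - S k))).
        cbn [Cpown]. ring.
        rewrite H1, H2.
        transitivity (qpoch q q m * (1 - q * Cpown q k + Cpown q (S k) - q * (Cpown q (S k) * Cpown q (m - S k)))).
        simpl Cpown. ring.
        rewrite Hp. simpl Cpown. ring.
Qed.

Fixpoint Nk (u : C) (k : nat) : C :=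
  match k with O => 1 | S k' => Nk u k' * (u - Cpown q (S k')) end.

Lemma qbin_SS m k : qbin (S m) (S k) = qbin m k + Cpown q (S k) * qbin m (S k).
Proof. reflexivity. Qed.

Lemma qbin_0 m : qbin m O = 1.
Proof. destruct m; reflexivity. Qed.

Lemma Cpsum_mult_r (f : nat -> C) x n : Cpsum f n * x = Cpsum (fun k => f k * x) n.
Proof. induction n; simpl. ring. rewrite <- IHn. ring. Qed.

Lemma newton (u : C) m : Cpsum (fun k => qbin m k * Cpown q (m - k) * Nk u k) (S m) = Cpown u m.
Proof.
  induction m.
  - simpl. ring.
  - rewrite Cpsum_S0. rewrite qbin_0. replace (S m - 0)%nat with (S m) by lia.
    rewrite (Cpsum_ext _ (fun k => qbin m k * Cpown q (m - k) * Nk u (S k) + Cpown q (S m) * (qbin m (S k) * Nk u (S k)))).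
    2: { intros k Hk. rewrite qbin_SS. replace (S m - S k)%nat with (m - k)%nat by lia.
         assert (Hp : Cpown q (S k) * Cpown q (m - k) = Cpown q (S m)).
         { rewrite <- Cpown_add. f_equal. lia. }
         rewrite <- Hp. ring. }
    rewrite Cpsum_plus, Cpsum_scal.
    change (Cpown u (S m)) with (Cpown u m * u). rewrite <- IHm.
    rewrite Cpsum_mult_r.
    rewrite (Cpsum_ext (fun k => qbin m k * Cpown q (m - k) * Nk u k * u) (fun k => qbin m k * Cpown q (m - k) * Nk u (S k) + Cpown q (S m) * (qbin m k * Nk u k))).
    2: { intros k Hk. change (Nk u (S k)) with (Nk u k * (u - Cpown q (S k))).
         assert (Hp : Cpown q (m - k) * Cpown q (S k) = Cpown q (S m)).
         { rewrite <- Cpown_add. f_equal. lia. }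
         rewrite <- Hp. ring. }
    rewrite Cpsum_plus, Cpsum_scal.
    rewrite (Cpsum_S0 (fun k => qbin m k * Nk u k)). rewrite qbin_0.
    change (Cpsum (fun k => qbin m (S k) * Nk u (S k)) (S m)) with
      (Cpsum (fun k => qbin m (S k) * Nk u (S k)) m + qbin m (S m) * Nk u (S m)).
    rewrite (qbin_gt m (S m)) by lia. simpl Nk. ring.
Qed.

Lemma zk_Nk (z : C) k : qpoch z q k * Cpown (q / z) k = Nk (q / z) k \/ z = 0.
Proof.
  destruct (Ceq_dec z 0) as [->|Hz]. right; auto. left.
  induction k. simpl. ring.
  change (qpoch z q (S k)) with (qpoch z q k * (1 - z * Cpown q k)).
  change (Nk (q / z) (S k)) with (Nk (q / z) k * (q / z - Cpown q (S k))).
  rewrite <- IHk. cbn [Cpown]. field. auto.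
Qed.

Lemma qbinom_sum (z : C) m : z <> 0 -> (forall j, qpoch q q j <> 0) ->
  Cpsum (fun k => qpoch z q k * Cpown (q / z) k * Cpown q (m - k) / (qpoch q q k * qpoch q q (m - k))) (S m)
  = Cpown (q / z) m / qpoch q q m.
Proof.
  intros Hz Hqq. rewrite <- newton.
  assert (Hd : forall (f : nat -> C) x n, Cpsum f n / x = Cpsum (fun k => f k / x) n).
  { intros f x n. unfold Cdiv. apply Cpsum_mult_r. }
  rewrite Hd.
  apply Cpsum_ext. intros k Hk.
  destruct (zk_Nk z k) as [E|E]; [|contradiction].
  pose proof (qbin_fact m k ltac:(lia)) as H.
  assert (Hb : qbin m k <> 0). { intro E0. apply (Hqq m). rewrite <- H, E0. ring. }
  rewrite <- E. rewrite <- H.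
  field. repeat split; auto.
Qed.

End QB.

Lemma shift_ne (v q : C) k : (forall n, v * Cpown q n <> 1) -> forall n, v * Cpown q k * Cpown q n <> 1.
Proof. intros H n. rewrite <- Cmult_assoc, <- Cpown_add. apply H. Qed.

Lemma final_sum (q r f g v w z : C) M :
  z <> 0 -> (forall j, qpoch q q j <> 0) ->
  (forall n, v * Cpown q n <> 1) -> (forall n, w * Cpown q n <> 1) ->
  Cpsum (fun k => qpoch r q k * qpoch f q k * qpoch g q k * qpoch z q k / (qpoch v q k * qpoch w q k * qpoch q q k) * Cpown (q / z) k *
     Cpsum (fun n => qpoch (r * Cpown q k) q n * qpoch (f * Cpown q k) q n * qpoch (g * Cpown q k) q n
        / (qpoch (v * Cpown q k) q n * qpoch (w * Cpown q k) q n * qpoch q q n) * Cpown q n) (S M - k)) (S M)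
  = Cpsum (fun m => qpoch r q m * qpoch f q m * qpoch g q m / (qpoch v q m * qpoch w q m * qpoch q q m) * Cpown (q / z) m) (S M).
Proof.
  intros Hz Hqq Hv Hw.
  set (Cm := fun m => qpoch r q m * qpoch f q m * qpoch g q m / (qpoch v q m * qpoch w q m)).
  set (hq := fun k n => qpoch z q k * Cpown (q / z) k * Cpown q n / (qpoch q q k * qpoch q q n)).
  rewrite (Cpsum_ext _ (fun k => Cpsum (fun n => Cm (k + n)%nat * hq k n) (S M - k))).
  2: { intros k Hk. rewrite <- Cpsum_scal. apply Cpsum_ext. intros n Hn.
       unfold Cm, hq. rewrite !qpoch_add.
       pose proof (qpoch_nz_fin v q k Hv). pose proof (qpoch_nz_fin w q k Hw).
       pose proof (qpoch_nz_fin _ q n (shift_ne v q k Hv)). pose proof (qpoch_nz_fin _ q n (shift_ne w q k Hw)).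
       pose proof (Hqq k). pose proof (Hqq n).
       field. repeat split; auto. }
  rewrite (reindex (fun k n => Cm (k + n)%nat * hq k n) (S M)).
  apply Cpsum_ext. intros m Hm.
  rewrite (Cpsum_ext _ (fun k => Cm m * hq k (m - k)%nat)).
  2: { intros k Hk. f_equal. f_equal. lia. }
  rewrite Cpsum_scal. unfold hq. rewrite qbinom_sum; auto.
  unfold Cm. field.
  pose proof (qpoch_nz_fin v q m Hv). pose proof (qpoch_nz_fin w q m Hw). pose proof (Hqq m).
  repeat split; auto.
Qed.


Lemma Cpsum_minus (f g : nat -> C) n : Cpsum (fun k => f k - g k) n = Cpsum f n - Cpsum g n.
Proof. induction n; simpl. ring. rewrite IHn. ring. Qed.

Lemma phi32_term (a1 a2 a3 b1 b2 q z : C) N : (forall n, (N <= n)%nat -> qpoch a1 q n = 0) ->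
  phi32 a1 a2 a3 b1 b2 q z = Cpsum (fun n => qpoch a1 q n * qpoch a2 q n * qpoch a3 q n
                 / (qpoch b1 q n * qpoch b2 q n * qpoch q q n) * Cpown z n) N.
Proof.
  intros H. unfold phi32. apply HasSum_Csum. apply HasSum_evzero. intros n Hn. rewrite H; auto. unfold Cdiv; ring.
Qed.

Section Fin.
Variable q : R.
Hypothesis Hq : (0 < q < 1)%R.
Notation qc := (RtoC q).

Lemma qint0_psum (G : nat -> C -> C) (be : nat -> C) (x : C) N :
  (forall k, exists L, CV (fun n => G k (x * Cpown qc n)) L) ->
  qint0 qc (fun t => Cpsum (fun k => be k * G k t) N) x = Cpsum (fun k => be k * qint0 qc (G k) x) N.
Proof.
  intros HG.
  assert (HS : forall k, HasSum (fun n => G k (x * Cpown qc n) * Cpown qc n) (Csum (fun n => G k (x * Cpown qc n) * Cpown qc n))).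
  { intros k. destruct (HG k) as [L HL]. apply (jack_has q Hq _ x L HL). }
  assert (HT : HasSum (fun n => Cpsum (fun k => be k * G k (x * Cpown qc n)) N * Cpown qc n)
                      (Cpsum (fun k => be k * Csum (fun n => G k (x * Cpown qc n) * Cpown qc n)) N)).
  { induction N.
    - simpl. eapply HasSum_ext; [|apply (HasSum_evzero (fun _ => RtoC 0) 0)]. intros; simpl; ring. auto.
    - simpl. eapply HasSum_ext; [|apply HasSum_plus; [exact IHN | apply HasSum_scal; apply (HS N)]].
      intros n. simpl. ring. }
  unfold qint0 at 1. rewrite (HasSum_Csum _ _ HT).
  unfold qint0. rewrite <- Cpsum_scal. apply Cpsum_ext. intros; ring.
Qed.

End Fin.

Theorem theorem6 (q : R) (M : nat) (a b c d f g v w : C) :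
  (0 < q < 1)%R ->
  b <> 0 -> c <> 0 -> d <> 0 ->
  (forall n : nat, v * Cpown (RtoC q) n <> 1) ->
  (forall n : nat, w * Cpown (RtoC q) n <> 1) ->
  (Cmod (a * c) < 1)%R -> (Cmod (a * d) < 1)%R ->
  (Cmod (b * c) < 1)%R -> (Cmod (b * d) < 1)%R ->
  (Cmod (RtoC q / (b * c)) < 1)%R ->
  let qc := RtoC q in
  let r := / Cpown qc M in
  qint qc
    (fun t =>
       qpoch_inf (qc * t / c) qc * qpoch_inf (qc * t / d) qc
       / (qpoch_inf (a * t) qc * qpoch_inf (b * t) qc)
       * Csum (fun k =>
           qpoch r qc k * qpoch f qc k * qpoch g qc k * qpoch (c / t) qc k
             * qpoch (a * b * c * d) qc k
           / (qpoch v qc k * qpoch w qc k * qpoch (a * c) qc k * qpoch qc qc k)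
           * Cpown (qc * t / (b * c * d)) k
           * phi32 (r * Cpown qc k) (f * Cpown qc k) (g * Cpown qc k)
                   (v * Cpown qc k) (w * Cpown qc k) qc qc))
    c d
  = d * (1 - qc) * qpoch_inf qc qc * qpoch_inf (d * qc / c) qc
      * qpoch_inf (c / d) qc * qpoch_inf (a * b * c * d) qc
    / (qpoch_inf (a * c) qc * qpoch_inf (a * d) qc
       * qpoch_inf (b * c) qc * qpoch_inf (b * d) qc)
    * phi32 r f g v w qc (qc / (b * c)).
Proof.
  intros Hq Hb Hc Hd Hv Hw Hac Had Hbc Hbd Hqbc qc r.
  subst qc. subst r.
  set (r := / Cpown (RtoC q) M).
  assert (Hq0 := qc_nz q Hq).
  assert (HM : Cpown (RtoC q) M <> 0) by (apply Cpown_nz; auto).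
  assert (Hr : r * Cpown (RtoC q) M = 1) by (unfold r; field; auto).
  assert (Nac := qinf_nz_lt1 q Hq _ Hac).
  assert (Nad := qinf_nz_lt1 q Hq _ Had).
  assert (Nbc := qinf_nz_lt1 q Hq _ Hbc).
  assert (Nbd := qinf_nz_lt1 q Hq _ Hbd).
  assert (Hsmall : forall x : C, (Cmod x < 1)%R -> forall n, x * Cpown (RtoC q) n <> 1).
  { intros x Hx n E. assert (Cmod (x * Cpown (RtoC q) n) = 1%R) by (rewrite E; apply Cmod_1).
    rewrite Cmod_mult, Cmod_Cpown_R in H by lra.
    assert (q ^ n <= 1)%R by (apply pow_le_one; lra). pose proof (Cmod_ge_0 x).
    assert (0 < q ^ n)%R by (apply pow_lt; lra). nra. }
  assert (Hqq : forall j, qpoch (RtoC q) (RtoC q) j <> 0).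
  { intros j. apply qpoch_nz_fin. apply Hsmall. rewrite Cmod_R, Rabs_pos_eq; lra. }
  assert (Habcd : forall k, qpoch (a * b * c * d) (RtoC q) k <> 0).
  { intros k. apply qpoch_nz_fin. apply Hsmall.
    replace (a * b * c * d) with ((a * c) * (b * d)) by ring. rewrite Cmod_mult.
    pose proof (Cmod_ge_0 (a * c)). pose proof (Cmod_ge_0 (b * d)). nra. }
  assert (Hack : forall k, qpoch (a * c) (RtoC q) k <> 0).
  { intros k. apply qpoch_nz_fin. apply Hsmall. auto. }
  set (phi := fun k => phi32 (r * Cpown (RtoC q) k) (f * Cpown (RtoC q) k) (g * Cpown (RtoC q) k)
                   (v * Cpown (RtoC q) k) (w * Cpown (RtoC q) k) (RtoC q) (RtoC q)).
  set (be := fun k => qpoch r (RtoC q) k * qpoch f (RtoC q) k * qpoch g (RtoC q) k * qpoch (a * b * c * d) (RtoC q) k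
           / (qpoch v (RtoC q) k * qpoch w (RtoC q) k * qpoch (a * c) (RtoC q) k * qpoch (RtoC q) (RtoC q) k)
           * Cpown (RtoC q / (b * c * d)) k * phi k).
  match goal with |- qint _ ?F _ _ = _ =>
    assert (Hint : F = (fun t => Cpsum (fun k => be k * (W q a b c d t * (qpoch (c / t) (RtoC q) k * Cpown t k))) (S M)));
    [|rewrite Hint] end.
  { apply functional_extensionality. intros t.
    match goal with |- _ * Csum ?T = _ =>
      assert (HT : Csum T = Cpsum T (S M)); [|rewrite HT] end.
    { apply HasSum_Csum. apply HasSum_evzero. intros k Hk. cbv beta.
      rewrite (qpoch_zero_at r (RtoC q) M k) by (auto; lia). unfold Cdiv; ring. }
    rewrite <- Cpsum_scal. apply Cpsum_ext. intros k _. unfold be, phi, W.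
    replace (RtoC q * t / (b * c * d)) with (RtoC q / (b * c * d) * t) by (unfold Cdiv; ring).
    rewrite Cpown_mult. unfold Cdiv; ring. }
  assert (Hgrid : forall (x : C), x <> 0 -> forall k, exists L,
     CV (fun n => W q a b c d (x * Cpown (RtoC q) n) * (qpoch (c / (x * Cpown (RtoC q) n)) (RtoC q) k * Cpown (x * Cpown (RtoC q) n) k)) L).
  { intros x Hx k. exists (1 * Pk c 0 (RtoC q) k).
    apply (CV_ext (fun n => W q a b c d (x * Cpown (RtoC q) n) * Pk c (x * Cpown (RtoC q) n) (RtoC q) k)).
    { intros n. rewrite A1; auto. apply Cmult_neq_0; auto. apply Cpown_nz; auto. }
    apply CV_mult. apply W_CV0; auto. apply Pk_CV; auto. }
  unfold qint.
  rewrite (qint0_psum q Hq (fun k t => W q a b c d t * (qpoch (c / t) (RtoC q) k * Cpown t k)) be d (S M) (Hgrid d Hd)).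
  rewrite (qint0_psum q Hq (fun k t => W q a b c d t * (qpoch (c / t) (RtoC q) k * Cpown t k)) be c (S M) (Hgrid c Hc)).
  rewrite <- Cpsum_minus.
  set (R0 := d * (1 - RtoC q) * qpoch_inf (RtoC q) (RtoC q) * qpoch_inf (d * RtoC q / c) (RtoC q)
      * qpoch_inf (c / d) (RtoC q) * qpoch_inf (a * b * c * d) (RtoC q)).
  set (P := qpoch_inf (a * c) (RtoC q) * qpoch_inf (a * d) (RtoC q) * qpoch_inf (b * c) (RtoC q) * qpoch_inf (b * d) (RtoC q)).
  assert (HP : P <> 0) by (unfold P; repeat apply Cmult_neq_0; auto).
  rewrite (Cpsum_ext _ (fun k => R0 / P * (be k * qpoch (a * c) (RtoC q) k * qpoch (b * c) (RtoC q) k * Cpown d k / qpoch (a * b * c * d) (RtoC q) k))).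
  2: { intros k _.
       pose proof (Ik_eval q Hq a b c d k Hc Hd) as IK. unfold qint in IK.
       replace (be k * qint0 (RtoC q) (fun t => W q a b c d t * (qpoch (c / t) (RtoC q) k * Cpown t k)) d -
                be k * qint0 (RtoC q) (fun t => W q a b c d t * (qpoch (c / t) (RtoC q) k * Cpown t k)) c)
          with (be k * (Dprod c (RtoC q) k * J q a b (c * Cpown (RtoC q) k) d)) by (rewrite <- IK; ring).
       pose proof (Jk_rel q Hq a b c d k Hc Hd Nac Nad Nbc Nbd) as JK. fold P R0 in JK.
       pose proof (Habcd k) as H1.
       replace (Dprod c (RtoC q) k * J q a b (c * Cpown (RtoC q) k) d) with
         ((Dprod c (RtoC q) k * J q a b (c * Cpown (RtoC q) k) d * P * qpoch (a * b * c * d) (RtoC q) k) / (P * qpoch (a * b * c * d) (RtoC q) k))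
         by (field; auto).
       rewrite JK. field. auto. }
  rewrite Cpsum_scal. f_equal.
  assert (Hbc0 : b * c <> 0) by (apply Cmult_neq_0; auto).
  rewrite (phi32_term r f g v w (RtoC q) (RtoC q / (b * c)) (S M)).
  2: { intros n Hn. apply (qpoch_zero_at r _ M n); auto; lia. }
  rewrite <- (final_sum (RtoC q) r f g v w (b * c) M Hbc0 Hqq Hv Hw).
  apply Cpsum_ext. intros k Hk.
  unfold be, phi.
  rewrite (phi32_term _ _ _ _ _ (RtoC q) (RtoC q) (S M - k)).
  2: { intros n Hn. apply (qpoch_zero_at _ _ (M - k) n). lia. rewrite <- Cmult_assoc, <- Cpown_add.
       replace (k + (M - k))%nat with M by lia. auto. }
  assert (Hpw : Cpown (RtoC q / (b * c * d)) k * Cpown d k = Cpown (RtoC q / (b * c)) k).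
  { rewrite <- Cpown_mult. f_equal. field. split; auto. }
  rewrite <- Hpw.
  pose proof (qpoch_nz_fin v (RtoC q) k Hv). pose proof (qpoch_nz_fin w (RtoC q) k Hw).
  pose proof (Hqq k). pose proof (Habcd k). pose proof (Hack k).
  field. repeat split; auto.
Qed.
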